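(* For parameters $(x_1,x_2,\xi_1,\xi_2)\in\mathbb{R}^{4n}$ consider the first-order differential operator on $L^2(\mathbb{R}_t)$ $$\tilde P=iD_t+a(t,\xi_2,\xi_1+t\xi_2)F(x_2-tx_1).$$ There exists a constant $C>0$ such that for all $u\in\mathscr S(\mathbb{R}_t)$ and all $(x_1,x_2,\xi_1,\xi_2)\in\mathbb{R}^{4n}$, $$\big\|(1+\langle x_1\rangle^{\frac{2\sigma}{2\sigma+1}}+\langle x_2-tx_1\rangle^{2\sigma})u\big\|_{L^2(\mathbb{R}_t)}\le C\big(\|\tilde Pu\|_{L^2(\mathbb{R}_t)}+\|u\|_{L^2(\mathbb{R}_t)}\big).$$
   Context: $0<\sigma<1$, $n\ge1$. $a\in C_b^\infty(\mathbb{R}^{2n+1})$ (smooth, all derivatives bounded) with $a(t,\xi,\eta)\ge a_0>0$ for all $(t,\xi,\eta)\in\mathbb{R}\times\mathbb{R}^n\times\mathbb{R}^n$. $w\in C^\infty(\mathbb{R}^n)$ with $0\le w\le1$, $w=1$ on $\{|\eta|\ge2\}$, $w=0$ on $\{|\eta|\le1\}$, and $F(x)=|x|^{2\sigma}w(x)+|x|^2(1-w(x))$. $D_t=(2\pi i)^{-1}\partial_t$, $\langle x\rangle=(1+|x|^2)^{1/2}$. In the estimate, $\langle x_2-tx_1\rangle^{2\sigma}$ acts as multiplication by a function of $t$. *)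

(* Defs.v *)
From Stdlib Require Import Reals Lra List.
From Stdlib Require Fin.
Open Scope R_scope.

Definition vec (n : nat) := Fin.t n -> R.

Fixpoint fsum (n : nat) : (Fin.t n -> R) -> R :=
  match n return (Fin.t n -> R) -> R with
  | O => fun _ => 0
  | S m => fun f => f Fin.F1 + fsum m (fun i => f (Fin.FS i))
  end.

Definition vnorm {n} (x : vec n) : R := sqrt (fsum n (fun i => x i ^ 2)).
Definition vadd {n} (x y : vec n) : vec n := fun i => x i + y i.
Definition vscal {n} (c : R) (x : vec n) : vec n := fun i => c * x i.
Definition vsub {n} (x y : vec n) : vec n := fun i => x i - y i.
Definition vshift {n} (x : vec n) (i : Fin.t n) (s : R) : vec n :=
  fun j => if Fin.eq_dec i j then x j + s else x j.

Definition jbr {n} (x : vec n) : R := sqrt (1 + vnorm x ^ 2).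

Definition rpow (r y : R) : R := if Rle_dec r 0 then 0 else Rpower r y.

(** Existence of all iterated partial derivatives along directions Dir:
    D l is the iterated partial derivative in the directions of l
    (the head of the list being the last derivative applied). *)
Definition partial_family {X Dir : Type} (move : X -> Dir -> R -> X)
  (f : X -> R) (D : list Dir -> X -> R) : Prop :=
  (forall x, D nil x = f x) /\
  (forall l d x, derivable_pt_lim (fun s => D l (move x d s)) 0 (D (d :: l) x)).

Definition move3 {n} (p : R * vec n * vec n) (d : option (Fin.t n + Fin.t n)) (s : R)
  : R * vec n * vec n :=
  match p with
  | (t, xi, eta) =>
    match d with
    | None => (t + s, xi, eta)
    | Some (inl i) => (t, vshift xi i s, eta)
    | Some (inr i) => (t, xi, vshift eta i s)
    end
  end.

Definition Cb_inf3 {n} (a : R -> vec n -> vec n -> R) : Prop :=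
  exists D, partial_family (@move3 n) (fun p => match p with (t, xi, eta) => a t xi eta end) D
    /\ forall l, exists M, forall p, Rabs (D l p) <= M.

Definition continuous_vec {n} (g : vec n -> R) : Prop :=
  forall x eps, 0 < eps -> exists delta, 0 < delta /\
    forall y, (forall i, Rabs (y i - x i) < delta) -> Rabs (g y - g x) < eps.

Definition smooth_vec {n} (w : vec n -> R) : Prop :=
  exists D, partial_family (@vshift n) w D /\ forall l, continuous_vec (D l).

Definition schwartz (u : R -> R) : Prop :=
  exists D : nat -> R -> R, (forall t, D O t = u t) /\
    (forall k t, derivable_pt_lim (D k) t (D (S k) t)) /\
    (forall k m, exists C, forall t, Rabs t ^ m * Rabs (D k t) <= C).

Definition Ffun {n} (sigma : R) (w : vec n -> R) (x : vec n) : R :=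
  rpow (vnorm x) (2 * sigma) * w x + vnorm x ^ 2 * (1 - w x).

Definition mult {n} (sigma : R) (a : R -> vec n -> vec n -> R) (w : vec n -> R)
  (x1 x2 xi1 xi2 : vec n) (t : R) : R :=
  a t xi2 (vadd xi1 (vscal t xi2)) * Ffun sigma w (vsub x2 (vscal t x1)).

Definition weight {n} (sigma : R) (x1 x2 : vec n) (t : R) : R :=
  1 + Rpower (jbr x1) (2 * sigma / (2 * sigma + 1))
    + Rpower (jbr (vsub x2 (vscal t x1))) (2 * sigma).

Definition int_on (g : R -> R) (a b I : R) : Prop :=
  exists pr : Riemann_integrable g a b, RiemannInt pr = I.

(** For a nonnegative integrand g: integral of g over R equals I
    (as the supremum of the integrals over [-N, N]). *)
Definition int_R (g : R -> R) (I : R) : Prop :=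
  is_lub (fun y => exists N, 0 <= N /\ int_on g (- N) N y) I.

(* Main.v *)
Require Import Defs.
From Stdlib Require Import Reals Lra Lia Psatz ClassicalEpsilon FunctionalExtensionality.
From Stdlib Require Fin.
From Stdlib Require Import List.
Open Scope R_scope.

Definition cont (f : R -> R) := forall x, continuity_pt f x.

Definition Int (f : R -> R) (a b : R) : R :=
  match excluded_middle_informative (exists pr : Riemann_integrable f a b, True) with
  | left h => RiemannInt (proj1_sig (constructive_indefinite_description _ h))
  | right _ => 0
  end.

Lemma Int_eq f a b (pr : Riemann_integrable f a b) : Int f a b = RiemannInt pr.
Proof.
  unfold Int. destruct excluded_middle_informative as [h|h].
  - apply RiemannInt_P5.
  - exfalso; apply h; exists pr; auto.
Qed.

Lemma cont_int f a b : cont f -> a <= b -> Riemann_integrable f a b.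
Proof. intros Hf Hab. apply continuity_implies_RiemannInt; auto. Qed.

Lemma cont_plus f g : cont f -> cont g -> cont (fun x => f x + g x).
Proof. intros Hf Hg x. exact (continuity_pt_plus f g x (Hf x) (Hg x)). Qed.
Lemma cont_minus f g : cont f -> cont g -> cont (fun x => f x - g x).
Proof. intros Hf Hg x. exact (continuity_pt_minus f g x (Hf x) (Hg x)). Qed.
Lemma cont_mult f g : cont f -> cont g -> cont (fun x => f x * g x).
Proof. intros Hf Hg x. exact (continuity_pt_mult f g x (Hf x) (Hg x)). Qed.
Lemma cont_const c : cont (fun _ => c).
Proof. intros x. exact (continuity_pt_const (fun _ => c) x (fun _ _ => eq_refl)). Qed.
Lemma cont_id : cont (fun x => x).
Proof. intros x. exact (derivable_continuous_pt id x (derivable_pt_id x)). Qed.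
Lemma cont_comp f g : cont f -> cont g -> cont (fun x => g (f x)).
Proof. intros Hf Hg x. exact (continuity_pt_comp f g x (Hf x) (Hg (f x))). Qed.
Lemma cont_pow f n : cont f -> cont (fun x => f x ^ n).
Proof. intros Hf; induction n; simpl. apply cont_const. apply cont_mult; auto. Qed.
Lemma cont_deriv f f' : (forall x, derivable_pt_lim f x (f' x)) -> cont f.
Proof. intros H x. apply derivable_continuous_pt. exists (f' x). apply H. Qed.

Lemma Int_const c a b : Int (fun _ => c) a b = c * (b - a).
Proof. exact (eq_trans (Int_eq (fct_cte c) a b (RiemannInt_P14 a b c)) (RiemannInt_P15 _)). Qed.

Lemma Int_plus f g a b : cont f -> cont g -> a <= b ->
  Int (fun x => f x + g x) a b = Int f a b + Int g a b.
Proof.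
  intros Hf Hg Hab.
  assert (pr3 := RiemannInt_P10 1 (cont_int f a b Hf Hab) (cont_int g a b Hg Hab)).
  rewrite (Int_eq f a b (cont_int f a b Hf Hab)), (Int_eq g a b (cont_int g a b Hg Hab)).
  replace (fun x => f x + g x) with (fun x => f x + 1 * g x) by (apply functional_extensionality; intros; ring).
  rewrite (Int_eq _ _ _ pr3). rewrite (RiemannInt_P13 (cont_int f a b Hf Hab) (cont_int g a b Hg Hab) pr3). ring.
Qed.

Lemma Int_scal f a b l : cont f -> a <= b ->
  Int (fun x => l * f x) a b = l * Int f a b.
Proof.
  intros Hf Hab.
  assert (pr3 := RiemannInt_P10 l (cont_int (fun _ => 0) a b (cont_const 0) Hab) (cont_int f a b Hf Hab)).
  rewrite (Int_eq f a b (cont_int f a b Hf Hab)).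
  replace (fun x => l * f x) with (fun x => (fun _ => 0) x + l * f x) by (apply functional_extensionality; intros; ring).
  rewrite (Int_eq _ _ _ pr3). rewrite (RiemannInt_P13 (cont_int (fun _ => 0) a b (cont_const 0) Hab) (cont_int f a b Hf Hab) pr3).
  rewrite <- (Int_eq (fun _ => 0) a b), Int_const. ring.
Qed.


Lemma Int_mono f g a b : cont f -> cont g -> a <= b -> (forall x, a <= x <= b -> f x <= g x) ->
  Int f a b <= Int g a b.
Proof.
  intros Hf Hg Hab H.
  rewrite (Int_eq f a b (cont_int f a b Hf Hab)), (Int_eq g a b (cont_int g a b Hg Hab)).
  apply RiemannInt_P19; auto. intros; apply H; lra.
Qed.

Lemma Int_nonneg f a b : cont f -> a <= b -> (forall x, a <= x <= b -> 0 <= f x) -> 0 <= Int f a b.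
Proof.
  intros Hf Hab H. rewrite <- (Rmult_0_l (b - a)), <- Int_const.
  apply Int_mono; auto. apply cont_const.
Qed.

Lemma Int_chasles f a b c : cont f -> a <= b -> b <= c -> Int f a b + Int f b c = Int f a c.
Proof.
  intros Hf H1 H2.
  rewrite (Int_eq f a b (cont_int f a b Hf H1)), (Int_eq f b c (cont_int f b c Hf H2)),
    (Int_eq f a c (cont_int f a c Hf (Rle_trans _ _ _ H1 H2))).
  apply RiemannInt_P26.
Qed.

Lemma Int_grow f N N' : cont f -> 0 <= N -> N <= N' -> (forall x, 0 <= f x) ->
  Int f (-N) N <= Int f (-N') N'.
Proof.
  intros Hf H0 H1 Hp.
  rewrite <- (Int_chasles f (-N') (-N) N') by (auto; lra).
  rewrite <- (Int_chasles f (-N) N N') by (auto; lra).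
  assert (0 <= Int f (-N') (-N)) by (apply Int_nonneg; auto; lra).
  assert (0 <= Int f N N') by (apply Int_nonneg; auto; lra).
  lra.
Qed.

Lemma Int_FTC G g a b : (forall x, derivable_pt_lim G x (g x)) -> cont g -> a <= b ->
  Int g a b = G b - G a.
Proof.
  intros HG Hg Hab.
  destruct (Rle_lt_or_eq_dec a b Hab) as [Hlt|Heq].
  2:{ subst. rewrite (Int_eq _ _ _ (RiemannInt_P7 g b)), RiemannInt_P9. ring. }
  set (C0 := fun x (_ : a <= x <= b) => Hg x).
  set (P := primitive Hab (FTC_P1 Hab C0)).
  rewrite (Int_eq g a b (cont_int g a b Hg Hab)).
  rewrite (RiemannInt_P20 Hab (FTC_P1 Hab C0) (cont_int g a b Hg Hab)).
  fold P.
  assert (HP : forall x, a <= x <= b -> derivable_pt_lim P x (g x)).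
  { intros x Hx. apply RiemannInt_P28; auto. }
  destruct (MVT_cor2 (fun x => G x - P x) (fun x => g x - g x) a b Hlt) as [c [Hc _]].
  { intros c Hc. apply derivable_pt_lim_minus; auto. }
  replace (g c - g c) with 0 in Hc by ring. lra.
Qed.

Lemma d_plus f g f' g' x : derivable_pt_lim f x f' -> derivable_pt_lim g x g' ->
  derivable_pt_lim (fun t => f t + g t) x (f' + g').
Proof. intros; exact (derivable_pt_lim_plus f g x f' g' H H0). Qed.
Lemma d_minus f g f' g' x : derivable_pt_lim f x f' -> derivable_pt_lim g x g' ->
  derivable_pt_lim (fun t => f t - g t) x (f' - g').
Proof. intros; exact (derivable_pt_lim_minus f g x f' g' H H0). Qed.
Lemma d_mult f g f' g' x : derivable_pt_lim f x f' -> derivable_pt_lim g x g' ->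
  derivable_pt_lim (fun t => f t * g t) x (f' * g x + f x * g').
Proof. intros. replace (f' * g x + f x * g') with (f' * g x + f x * g') by ring.
  exact (derivable_pt_lim_mult f g x f' g' H H0). Qed.
Lemma d_const c x : derivable_pt_lim (fun _ => c) x 0.
Proof. exact (derivable_pt_lim_const c x). Qed.
Lemma d_id x : derivable_pt_lim (fun t => t) x 1.
Proof. exact (derivable_pt_lim_id x). Qed.
Lemma d_comp f g f' g' x : derivable_pt_lim f x f' -> derivable_pt_lim g (f x) g' ->
  derivable_pt_lim (fun t => g (f t)) x (g' * f').
Proof. intros. exact (derivable_pt_lim_comp f g x f' g' H H0). Qed.
Lemma d_ext f l l' x : derivable_pt_lim f x l -> l = l' -> derivable_pt_lim f x l'.
Proof. intros; subst; auto. Qed.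
Lemma d_sq f f' x : derivable_pt_lim f x f' -> derivable_pt_lim (fun t => f t ^ 2) x (2 * f x * f').
Proof. intros H.
  replace (fun t => f t ^ 2) with (fun t => f t * f t) by (apply functional_extensionality; intros; ring).
  apply d_ext with (f' * f x + f x * f'); [|ring]. apply d_mult; auto. Qed.
Lemma d_scal c f f' x : derivable_pt_lim f x f' -> derivable_pt_lim (fun t => c * f t) x (c * f').
Proof. intros H. apply d_ext with (0 * f x + c * f'); [|ring]. apply d_mult; auto. apply d_const. Qed.

Lemma Int_lin f g a b l : cont f -> cont g -> a <= b ->
  Int (fun x => f x + l * g x) a b = Int f a b + l * Int g a b.
Proof.
  intros Hf Hg Hab. rewrite (Int_plus f (fun x => l * g x)); auto.
  rewrite Int_scal; auto. intros x. apply cont_mult. apply cont_const. auto.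
Qed.
Lemma cont_Rmult c : cont (Rmult c).
Proof. intros x. apply (cont_mult (fun _ => c) (fun x => x)); [apply cont_const|apply cont_id]. Qed.
Lemma cont_Rplus c : cont (Rplus c).
Proof. intros x. apply (cont_plus (fun _ => c) (fun x => x)); [apply cont_const|apply cont_id]. Qed.
Lemma cont_Rminus c : cont (Rminus c).
Proof. intros x. apply (cont_minus (fun _ => c) (fun x => x)); [apply cont_const|apply cont_id]. Qed.
Lemma cont_opp f : cont f -> cont (fun x => - f x).
Proof. intros Hf x. exact (continuity_pt_opp f x (Hf x)). Qed.

Ltac solve_cont :=
  repeat (first
    [ assumption
    | apply cont_plus
    | apply cont_minus
    | apply cont_mult
    | apply cont_pow
    | apply cont_const
    | apply cont_id
    | apply cont_opp
    | apply cont_Rmult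
    | apply cont_Rplus
    | apply cont_Rminus ]).

Definition Uf (ur ui : R -> R) t := ur t ^ 2 + ui t ^ 2.
Definition Phif (ur ui dur dui m : R -> R) t :=
  (dur t / (2 * PI) + m t * ur t) ^ 2 + (dui t / (2 * PI) + m t * ui t) ^ 2.

Lemma amgm A b d : 0 < d -> A * b <= (d * A ^ 2 + b ^ 2 / d) / 2.
Proof.
  intros Hd. assert (H : 0 <= (d * A - b) ^ 2) by apply pow2_ge_0.
  assert (E : (d * A ^ 2 + b ^ 2 / d) / 2 - A * b = (d * A - b) ^ 2 / (2 * d)) by (field; lra).
  assert (0 <= (d * A - b) ^ 2 / (2 * d)) by (unfold Rdiv; apply Rmult_le_pos; [lra | apply Rlt_le, Rinv_0_lt_compat; lra]). lra.
Qed.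

Lemma MI (ur ui dur dui m g g' : R -> R) (N d : R) :
  (forall t, derivable_pt_lim ur t (dur t)) -> (forall t, derivable_pt_lim ui t (dui t)) ->
  cont dur -> cont dui -> cont m ->
  (forall t, derivable_pt_lim g t (g' t)) -> cont g' -> 0 <= N -> 0 < d ->
  Int (fun t => m t * g t * Uf ur ui t) (-N) N - / (4 * PI) * Int (fun t => g' t * Uf ur ui t) (-N) N
  <= (d * Int (Phif ur ui dur dui m) (-N) N + Int (fun t => g t ^ 2 * Uf ur ui t) (-N) N / d) / 2
     + / (4 * PI) * Rabs (g N * Uf ur ui N - g (-N) * Uf ur ui (-N)).
Proof.
  intros Hr Hi Cr Ci Cm Hg Cg' HN Hd.
  assert (Cur : cont ur) by (apply (cont_deriv ur dur); auto).
  assert (Cui : cont ui) by (apply (cont_deriv ui dui); auto).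
  assert (Cg : cont g) by (apply (cont_deriv g g'); auto).
  assert (PI0 : 0 < PI) by apply PI_RGT_0.
  assert (HNN : -N <= N) by lra.
  set (V' := fun t => g' t * Uf ur ui t + g t * (2 * ur t * dur t + 2 * ui t * dui t)).
  assert (HV : forall t, derivable_pt_lim (fun t => g t * Uf ur ui t) t (V' t)).
  { intros t. unfold V', Uf.
    apply d_ext with (g' t * (ur t ^ 2 + ui t ^ 2) + g t * (2 * ur t * dur t + 2 * ui t * dui t)); [|ring].
    apply (d_mult g (fun t => ur t ^ 2 + ui t ^ 2)); auto.
    apply (d_ext _ (2 * ur t * dur t + 2 * ui t * dui t)); [|ring].
    apply (d_plus (fun t => ur t ^ 2) (fun t => ui t ^ 2)); apply d_sq; auto. }
  assert (CU : cont (Uf ur ui)) by (unfold Uf; solve_cont).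
  assert (CV' : cont V') by (unfold V'; solve_cont).
  assert (FT := Int_FTC _ V' (-N) N HV CV' HNN).
  set (A1 := fun t => m t * g t * Uf ur ui t).
  set (A2 := fun t => g' t * Uf ur ui t).
  assert (C1 : cont A1) by (unfold A1; solve_cont).
  assert (C2 : cont A2) by (unfold A2; solve_cont).
  assert (CP : cont (Phif ur ui dur dui m)) by (unfold Phif; solve_cont; intros x; unfold Rdiv; solve_cont).
  set (A3 := fun t => g t ^ 2 * Uf ur ui t).
  assert (C3 : cont A3) by (unfold A3; solve_cont).
  assert (Hmono : Int (fun t => (A1 t + (- / (4 * PI)) * A2 t) + / (4 * PI) * V' t) (-N) N <=
                  Int (fun t => d / 2 * Phif ur ui dur dui m t + / (2 * d) * A3 t) (-N) N).
  { apply Int_mono; auto.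
    - apply cont_plus. apply cont_plus; auto. apply cont_mult; auto. apply cont_const.
      apply cont_mult; auto. apply cont_const.
    - apply cont_plus; apply cont_mult; auto; apply cont_const.
    - intros t _. unfold A1, A2, A3, V', Phif, Uf.
      assert (E1 := amgm (dur t / (2 * PI) + m t * ur t) (ur t * g t) d Hd).
      assert (E2 := amgm (dui t / (2 * PI) + m t * ui t) (ui t * g t) d Hd).
      assert (EQ : m t * g t * (ur t ^ 2 + ui t ^ 2) + - / (4 * PI) * (g' t * (ur t ^ 2 + ui t ^ 2)) +
        / (4 * PI) * (g' t * (ur t ^ 2 + ui t ^ 2) + g t * (2 * ur t * dur t + 2 * ui t * dui t))
        = (dur t / (2 * PI) + m t * ur t) * (ur t * g t) + (dui t / (2 * PI) + m t * ui t) * (ui t * g t))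
        by (field; lra).
      rewrite EQ.
      assert (EQ2 : d / 2 * ((dur t / (2 * PI) + m t * ur t) ^ 2 + (dui t / (2 * PI) + m t * ui t) ^ 2) +
          / (2 * d) * (g t ^ 2 * (ur t ^ 2 + ui t ^ 2)) =
          (d * (dur t / (2 * PI) + m t * ur t) ^ 2 + (ur t * g t) ^ 2 / d) / 2 +
          (d * (dui t / (2 * PI) + m t * ui t) ^ 2 + (ui t * g t) ^ 2 / d) / 2) by (field; lra).
      rewrite EQ2. lra. }
  rewrite Int_lin in Hmono; auto.
  2:{ apply cont_plus; auto. apply cont_mult; auto. apply cont_const. }
  rewrite Int_lin in Hmono; auto.
  rewrite (Int_lin (fun t => d / 2 * Phif ur ui dur dui m t)) in Hmono; auto.
  2:{ apply cont_mult; auto. apply cont_const. }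
  rewrite Int_scal in Hmono; auto.
  rewrite FT in Hmono.
  assert (HR := Rle_abs (g N * Uf ur ui N - g (-N) * Uf ur ui (-N))).
  assert (0 < / (4 * PI)) by (apply Rinv_0_lt_compat; lra).
  assert (E : / (2 * d) * Int A3 (- N) N = Int A3 (- N) N / d / 2) by (field; lra).
  fold A1 A2 A3. rewrite E in Hmono.
  assert (H4 : / (4 * PI) * (g N * Uf ur ui N - g (- N) * Uf ur ui (- N)) >=
    - (/ (4 * PI) * Rabs (g N * Uf ur ui N - g (- N) * Uf ur ui (- N)))).
  { assert (HR2 := Rle_abs (- (g N * Uf ur ui N - g (- N) * Uf ur ui (- N)))).
    rewrite Rabs_Ropp in HR2. nra. }
  lra.
Qed.

Definition decay (u : R -> R) := forall j : nat, exists C, forall t, Rabs t ^ j * Rabs (u t) <= C.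

Lemma decay_aux u : decay u -> exists C, 0 <= C /\ forall t, (1 <= t ^ 2 -> (1 + t ^ 2) * u t ^ 2 * t ^ 2 <= C).
Proof.
  intros Hd. destruct (Hd 3%nat) as [C HC]. exists (2 * C ^ 2). split. nra.
  intros t Ht. specialize (HC t).
  assert (H0 : 0 <= Rabs t ^ 3 * Rabs (u t)).
  { apply Rmult_le_pos. apply pow_le, Rabs_pos. apply Rabs_pos. }
  assert (H1 : (Rabs t ^ 3 * Rabs (u t)) ^ 2 <= C ^ 2) by nra.
  assert (E : (Rabs t ^ 3 * Rabs (u t)) ^ 2 = t ^ 6 * u t ^ 2).
  { rewrite RPow_abs, <- Rabs_mult, pow2_abs. ring. }
  rewrite E in H1. assert (0 <= t ^ 2 * u t ^ 2) by (apply Rmult_le_pos; apply pow2_ge_0).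
  assert (0 <= u t ^ 2) by apply pow2_ge_0.
  assert ((1 + t ^ 2) * u t ^ 2 * t ^ 2 <= 2 * t ^ 6 * u t ^ 2).
  { assert (t ^ 6 = t ^ 2 * t ^ 2 * t ^ 2) by ring. rewrite H3. nra. }
  lra.
Qed.

Lemma bd_small ur ui g G : decay ur -> decay ui -> 0 <= G -> (forall t, Rabs (g t) <= G * (1 + t ^ 2)) ->
  forall eta, 0 < eta -> exists N1, 0 <= N1 /\ forall N, N1 <= N ->
    Rabs (g N * Uf ur ui N - g (-N) * Uf ur ui (-N)) <= eta.
Proof.
  intros Dr Di HG Hg eta Heta.
  destruct (decay_aux ur Dr) as [C1 [HC1 H1]].
  destruct (decay_aux ui Di) as [C2 [HC2 H2]].
  set (Q := 2 * G * (C1 + C2) + 1).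
  assert (HQ : 0 < Q) by (unfold Q; nra).
  exists (1 + Q / eta). split. { assert (0 < Q / eta) by (apply Rdiv_lt_0_compat; lra). lra. }
  intros N HN.
  assert (HQe : 0 < Q / eta) by (apply Rdiv_lt_0_compat; lra).
  assert (HN1 : 1 <= N) by lra.
  assert (HN2 : 1 <= N ^ 2) by nra.
  assert (Hpt : forall t, t ^ 2 = N ^ 2 -> Rabs (g t * Uf ur ui t) * N ^ 2 <= G * (C1 + C2)).
  { intros t Ht. unfold Uf. rewrite Rabs_mult.
    assert (0 <= ur t ^ 2 + ui t ^ 2) by (apply Rplus_le_le_0_compat; apply pow2_ge_0).
    rewrite (Rabs_right (ur t ^ 2 + ui t ^ 2)) by lra.
    assert (A1 := H1 t ltac:(lra)). assert (A2 := H2 t ltac:(lra)). rewrite Ht in A1, A2.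
    assert (B := Hg t). rewrite Ht in B.
    assert (0 <= Rabs (g t)) by apply Rabs_pos.
    assert (0 <= ur t ^ 2) by apply pow2_ge_0. assert (0 <= ui t ^ 2) by apply pow2_ge_0.
    assert (Rabs (g t) * (ur t ^ 2 + ui t ^ 2) * N ^ 2 <= G * (1 + N ^ 2) * (ur t ^ 2 + ui t ^ 2) * N ^ 2).
    { apply Rmult_le_compat_r. nra. apply Rmult_le_compat_r; lra. }
    nra. }
  assert (E1 := Hpt N eq_refl). assert (E2 := Hpt (-N) ltac:(ring)).
  assert (Htri := Rabs_triang (g N * Uf ur ui N) (- (g (-N) * Uf ur ui (-N)))).
  rewrite Rabs_Ropp in Htri. unfold Rminus.
  assert (HNQ : Q <= eta * N ^ 2).
  { assert (N * 1 <= N * N) by (apply Rmult_le_compat_l; lra).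
    assert (Q / eta <= N ^ 2) by nra.
    apply (Rmult_le_compat_l eta) in H0; [|lra]. 
    replace (eta * (Q / eta)) with Q in H0 by (field; lra). lra. }
  assert ((Rabs (g N * Uf ur ui N) + Rabs (g (- N) * Uf ur ui (- N))) * N ^ 2 <= eta * N ^ 2).
  { unfold Q in HNQ. nra. }
  apply Rmult_le_reg_r in H; [|nra]. lra.
Qed.

Lemma PI_ge1 : 1 <= PI.
Proof. unfold PI. assert (H := pi2_int). lra. Qed.

Lemma Rpow_pos x y : 0 < Rpower x y.
Proof. unfold Rpower; apply exp_pos. Qed.
Lemma Rpow_sq x y : Rpower x y ^ 2 = Rpower x (2 * y).
Proof. replace (2 * y) with (y + y) by ring. rewrite Rpower_plus. ring. Qed.
Lemma Rpow2 x : 0 < x -> Rpower x 2 = x ^ 2.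
Proof. intros. replace 2 with (INR 2) by (simpl; ring). rewrite Rpower_pow; auto. Qed.
Lemma Rpow_mono_base a b y : 0 <= y -> 0 < a -> a <= b -> Rpower a y <= Rpower b y.
Proof. intros. apply Rle_Rpower_l; auto. Qed.
Lemma Rpow_mono_exp x y z : 1 <= x -> y <= z -> Rpower x y <= Rpower x z.
Proof. intros. apply Rle_Rpower; auto. Qed.
Lemma Rpow_1 x : 0 < x -> Rpower x 1 = x.
Proof. apply Rpower_1. Qed.

Ltac pos := repeat (first [lra | apply pow2_ge_0 | apply Rmult_le_pos | apply Rplus_le_le_0_compat | (apply Rlt_le; apply Rinv_0_lt_compat; nra) | lra]).

Definition qf (c0 p k t : R) := c0 - 2 * p * t + k ^ 2 * t ^ 2.

Section Core.
Variables (sigma a0 k p c0 : R) (ur ui dur dui m : R -> R).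
Hypotheses (hs : 0 < sigma < 1) (ha0 : 0 < a0) (hk : 0 <= k)
  (hq0 : forall t, 0 <= qf c0 p k t)
  (hcs : forall t, (k ^ 2 * t - p) ^ 2 <= k ^ 2 * qf c0 p k t)
  (Hr : forall t, derivable_pt_lim ur t (dur t)) (Hi : forall t, derivable_pt_lim ui t (dui t))
  (Cr : cont dur) (Ci : cont dui) (Cm : cont m)
  (hm1 : forall t, 1 <= qf c0 p k t -> a0 * Rpower (qf c0 p k t) sigma <= m t)
  (hm0 : forall t, qf c0 p k t <= 1 -> a0 * qf c0 p k t <= m t).

Let q t := qf c0 p k t.
Let U := Uf ur ui.
Let Phi := Phif ur ui dur dui m.
Let bd (g : R -> R) N := / (4 * PI) * Rabs (g N * U N - g (-N) * U (-N)).

Lemma Cur : cont ur. Proof. apply (cont_deriv ur dur); auto. Qed.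
Lemma Cui : cont ui. Proof. apply (cont_deriv ui dui); auto. Qed.
Lemma CU : cont U. Proof. unfold U, Uf. assert (H1 := Cur); assert (H2 := Cui). solve_cont. Qed.
Lemma CPhi : cont Phi.
Proof. unfold Phi, Phif. assert (H1 := Cur); assert (H2 := Cui). unfold Rdiv. solve_cont. Qed.
Lemma Upos t : 0 <= U t.
Proof. unfold U, Uf. apply Rplus_le_le_0_compat; apply pow2_ge_0. Qed.
Lemma mpos t : 0 <= m t.
Proof.
  destruct (Rle_dec 1 (q t)).
  - assert (H := hm1 t r). assert (0 < Rpower (q t) sigma) by apply Rpow_pos. unfold q in *. nra.
  - assert (H := hm0 t ltac:(unfold q in *; lra)). assert (H0 := hq0 t). nra.
Qed.
Lemma bd_pos g N : 0 <= bd g N.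
Proof. unfold bd. apply Rmult_le_pos. apply Rlt_le, Rinv_0_lt_compat. assert (H := PI_RGT_0). lra. apply Rabs_pos. Qed.
Lemma Cq : cont q.
Proof. unfold q, qf. solve_cont. Qed.

Lemma step1 N d : 0 <= N -> 0 < d ->
  Int (fun t => m t * U t) (-N) N <= (d * Int Phi (-N) N + Int U (-N) N / d) / 2 + bd (fun _ => 1) N.
Proof.
  intros HN Hd.
  assert (H := MI ur ui dur dui m (fun _ => 1) (fun _ => 0) N d Hr Hi Cr Ci Cm (fun t => d_const 1 t) (cont_const 0) HN Hd).
  cbv beta in H.
  replace (fun t => m t * 1 * Uf ur ui t) with (fun t => m t * U t) in H by (apply functional_extensionality; intros; unfold U; ring).
  replace (fun t => 0 * Uf ur ui t) with (fun t : R => 0) in H by (apply functional_extensionality; intros; ring).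
  replace (fun t => 1 ^ 2 * Uf ur ui t) with U in H by (apply functional_extensionality; intros; unfold U; ring).
  rewrite Int_const in H. unfold bd. fold U Phi in H. lra.
Qed.


Let gam := 2 * sigma / (2 * sigma + 1).
Let mu := Rpower k gam.
Let t0 := p / k ^ 2.
Let psi t := / (1 + (mu * (t - t0)) ^ 2) * mu.
Let g3 t := -1 * atan (mu * (t - t0)).

Lemma gam_bounds : 0 < gam /\ 3 * gam <= 2 /\ (2 - 2 * gam) * sigma = gam.
Proof.
  unfold gam. assert (0 < 2 * sigma + 1) by lra. split; [|split].
  - apply Rdiv_lt_0_compat; lra.
  - apply (Rmult_le_reg_r (2 * sigma + 1)); auto. field_simplify; lra.
  - field. lra.
Qed.

Lemma ptw3 t : 1 <= k -> mu <= 2 * psi t + m t / a0.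
Proof.
  intros hk1. destruct gam_bounds as [G1 [G2 G3]].
  assert (Hmu : 0 < mu) by apply Rpow_pos.
  assert (Hmt := mpos t).
  assert (Hma : 0 <= m t / a0) by (apply Rmult_le_pos; auto; apply Rlt_le, Rinv_0_lt_compat; lra).
  set (s := mu * (t - t0)).
  assert (Hs2 : 0 <= s ^ 2) by apply pow2_ge_0.
  assert (Hpsi : psi t = mu / (1 + s ^ 2)) by (unfold psi; fold s; unfold Rdiv; ring).
  assert (Hpsi0 : 0 <= psi t) by (rewrite Hpsi; apply Rmult_le_pos; [lra| apply Rlt_le, Rinv_0_lt_compat; lra]).
  destruct (Rle_dec (s ^ 2) 1) as [Hle|Hgt].
  - assert (mu / 2 <= psi t).
    { rewrite Hpsi. apply Rmult_le_compat_l; [lra|]. apply Rinv_le_contravar; lra. }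
    lra.
  - assert (Hk2 : 0 < k ^ 2) by nra.
    assert (Hq : k ^ 2 * (t - t0) ^ 2 <= q t).
    { assert (H := hcs t). assert (E : k ^ 2 * t - p = k ^ 2 * (t - t0)) by (unfold t0; field; lra).
      rewrite E in H. unfold q.
      apply (Rmult_le_reg_l (k ^ 2)); auto. nra. }
    set (e := 2 - 2 * gam).
    assert (He : k ^ 2 = Rpower k e * mu ^ 2).
    { unfold mu. rewrite Rpow_sq, <- Rpower_plus. unfold e. replace (2 - 2 * gam + 2 * gam) with 2 by ring.
      rewrite Rpow2; lra. }
    assert (Hke : 0 < Rpower k e) by apply Rpow_pos.
    assert (Hqk : Rpower k e < q t).
    { assert (Rpower k e * 1 < Rpower k e * (mu ^ 2 * (t - t0) ^ 2)).
      { apply Rmult_lt_compat_l; auto. unfold s in Hgt. lra. }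
      nra. }
    assert (Hmue : mu <= Rpower k e) by (unfold mu; apply Rpow_mono_exp; unfold e; lra).
    assert (mu <= m t / a0).
    { destruct (Rle_dec 1 (q t)) as [H1|H1].
      - assert (H := hm1 t H1).
        assert (Hmo : Rpower (Rpower k e) sigma <= Rpower (q t) sigma) by (apply Rpow_mono_base; lra).
        rewrite Rpower_mult in Hmo. fold e in G3. rewrite G3 in Hmo. fold mu in Hmo.
        apply (Rmult_le_reg_l a0); auto. unfold Rdiv. rewrite <- Rmult_assoc, Rinv_r_simpl_m by lra. 
        unfold q in *. nra.
      - assert (H := hm0 t ltac:(unfold q in *; lra)).
        apply (Rmult_le_reg_l a0); auto. unfold Rdiv. rewrite <- Rmult_assoc, Rinv_r_simpl_m by lra.
        unfold q in *. nra. }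
    lra.
Qed.


Let c1 := 32 * PI + / a0.

Lemma g3_deriv t : derivable_pt_lim g3 t (-1 * psi t).
Proof.
  unfold g3, psi. apply d_scal.
  apply (d_comp (fun t => mu * (t - t0)) atan).
  - apply d_ext with (mu * (1 - 0)); [|ring]. apply d_scal. apply d_minus. apply d_id. apply d_const.
  - apply derivable_pt_lim_atan.
Qed.

Lemma Cpsi : cont psi.
Proof.
  intros x. unfold psi. apply (cont_mult (fun t => / (1 + (mu * (t - t0)) ^ 2)) (fun _ => mu)); [|apply cont_const].
  intros y. apply continuity_pt_inv.
  - apply (cont_plus (fun _ => 1) (fun t => (mu * (t - t0)) ^ 2)). apply cont_const.
    apply cont_pow. apply (cont_mult (fun _ => mu) (fun t => t - t0)). apply cont_const.
    apply cont_minus. apply cont_id. apply cont_const.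
  - assert (0 <= (mu * (y - t0)) ^ 2) by apply pow2_ge_0. lra.
Qed.

Lemma Cg3 : cont g3.
Proof. apply (cont_deriv g3 (fun t => -1 * psi t)). apply g3_deriv. Qed.

Lemma g3_bound t : -2 <= g3 t <= 2.
Proof. unfold g3. assert (H := atan_bound (mu * (t - t0))). assert (H4 := PI_4). lra. Qed.

Lemma step3 N : 1 <= k -> 0 <= N ->
  mu ^ 2 * Int U (-N) N <= 4 * c1 ^ 2 * Int Phi (-N) N + 2 * mu * c1 * (bd (fun _ => 1) N + bd g3 N).
Proof.
  intros hk1 HN.
  assert (HNN : -N <= N) by lra.
  assert (Hmu : 0 < mu) by apply Rpow_pos.
  assert (PI0 : 0 < PI) by apply PI_RGT_0.
  assert (Hc1 : 32 * PI < c1) by (unfold c1; assert (0 < / a0) by (apply Rinv_0_lt_compat; lra); lra).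
  assert (Hc1' : / a0 < c1) by (unfold c1; lra).
  set (d := 2 * c1 / mu).
  assert (Hd : 0 < d) by (unfold d; apply Rdiv_lt_0_compat; lra).
  set (X := Int U (-N) N). set (Y := Int Phi (-N) N).
  set (M1 := Int (fun t => m t * U t) (-N) N).
  set (P := Int (fun t => psi t * U t) (-N) N).
  set (b1 := bd (fun _ => 1) N). set (b3 := bd g3 N).
  assert (HX : 0 <= X) by (apply Int_nonneg; auto; [apply CU | intros; apply Upos]).
  assert (HY : 0 <= Y) by (apply Int_nonneg; auto; [apply CPhi | intros; unfold Phi, Phif;
     apply Rplus_le_le_0_compat; apply pow2_ge_0]).
  assert (Hb1 : 0 <= b1) by apply bd_pos. assert (Hb3 : 0 <= b3) by apply bd_pos.
  assert (CmU : cont (fun t => m t * U t)) by (apply cont_mult; auto; apply CU).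
  assert (CpU : cont (fun t => psi t * U t)) by (apply cont_mult; [apply Cpsi|apply CU]).
  assert (Ha : M1 <= (d * Y + X / d) / 2 + b1) by (apply step1; auto).
  assert (Hmi := MI ur ui dur dui m g3 (fun t => -1 * psi t) N d Hr Hi Cr Ci Cm g3_deriv
     ltac:(apply (cont_mult (fun _ => -1) psi); [apply cont_const|apply Cpsi]) HN Hd).
  cbv beta in Hmi. fold U Phi in Hmi. fold Y b3 in Hmi.
  replace (fun t => -1 * psi t * U t) with (fun t => -1 * (psi t * U t)) in Hmi
    by (apply functional_extensionality; intros; ring).
  rewrite Int_scal in Hmi; auto. fold P in Hmi.
  assert (Hb : -2 * M1 <= Int (fun t => m t * g3 t * U t) (-N) N).
  { unfold M1. rewrite <- Int_scal; auto. apply Int_mono; auto.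
    - apply cont_mult; auto. apply cont_const.
    - apply cont_mult; [apply cont_mult; auto; apply Cg3 | apply CU].
    - intros t _. assert (H1 := g3_bound t). assert (H2 := mpos t). assert (H3 := Upos t).
      assert (0 <= m t * U t) by (apply Rmult_le_pos; auto). nra. }
  assert (Hg : Int (fun t => g3 t ^ 2 * U t) (-N) N <= 4 * X).
  { unfold X. rewrite <- Int_scal; auto; [|apply CU]. apply Int_mono; auto.
    - apply cont_mult; [apply cont_pow; apply Cg3|apply CU].
    - apply cont_mult; [apply cont_const|apply CU].
    - intros t _. assert (H1 := g3_bound t). assert (H3 := Upos t).
      assert (g3 t ^ 2 <= 4) by nra. nra. }
  assert (Hd' : mu * X <= 2 * P + / a0 * M1).
  { unfold X, P, M1. rewrite <- Int_scal; auto; [|apply CU]. rewrite <- Int_scal; auto.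
    rewrite <- Int_scal; auto. rewrite <- Int_plus; auto.
    - apply Int_mono; auto.
      + apply cont_mult; [apply cont_const|apply CU].
      + apply cont_plus; apply cont_mult; auto; apply cont_const.
      + intros t _. assert (H1 := ptw3 t hk1). assert (H3 := Upos t).
        assert (E : 2 * (psi t * U t) + / a0 * (m t * U t) = (2 * psi t + m t / a0) * U t) by (unfold Rdiv; ring).
        rewrite E. apply Rmult_le_compat_r; auto.
    - apply cont_mult; auto; apply cont_const.
    - apply cont_mult; auto; apply cont_const. }
  set (T := d * Y + X / d).
  assert (HT : 0 <= X / d) by (apply Rmult_le_pos; auto; apply Rlt_le, Rinv_0_lt_compat; auto).
  assert (HT2 : Int (fun t => g3 t ^ 2 * U t) (- N) N / d <= 4 * X / d).
  { unfold Rdiv. apply Rmult_le_compat_r; auto. apply Rlt_le, Rinv_0_lt_compat; auto. }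
  assert (Hr4 : 0 < / (4 * PI)) by (apply Rinv_0_lt_compat; lra).
  assert (HrP : / (4 * PI) * P <= 3 * T + b3 + 2 * b1).
  { unfold T. assert (4 * X / d = 4 * (X / d)) by (unfold Rdiv; ring).
    assert (/ (4 * PI) * (-1 * P) = - (/ (4 * PI) * P)) by ring.
    assert (0 <= d * Y) by (apply Rmult_le_pos; lra). 
    assert (Eb : / (4 * PI) * Rabs (g3 N * U N - g3 (- N) * U (- N)) = b3) by reflexivity. lra. }
  assert (HP : P <= 4 * PI * (3 * T + b3 + 2 * b1)).
  { apply (Rmult_le_reg_l (/ (4 * PI))); auto. rewrite <- Rmult_assoc, Rinv_l by lra. lra. }
  assert (HT0 : 0 <= T) by (unfold T; nra).
  assert (Hia : 0 < / a0) by (apply Rinv_0_lt_compat; lra).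
  assert (HmuX : mu * X <= c1 * (T + b1 + b3)).
  { assert (HaT : M1 <= T / 2 + b1) by (unfold T; lra).
    assert (/ a0 * M1 <= / a0 * (T / 2 + b1)) by (apply Rmult_le_compat_l; lra).
    assert (E : c1 * (T + b1 + b3) - (2 * (4 * PI * (3 * T + b3 + 2 * b1)) + / a0 * (T / 2 + b1)) =
      8 * (PI * T) + 16 * (PI * b1) + 24 * (PI * b3) + (/ a0 * T) / 2 + / a0 * b3) .
    { unfold c1. field. lra. }
    assert (0 <= PI * T) by (apply Rmult_le_pos; lra).
    assert (0 <= PI * b1) by (apply Rmult_le_pos; lra).
    assert (0 <= PI * b3) by (apply Rmult_le_pos; lra).
    assert (0 <= / a0 * T) by (apply Rmult_le_pos; lra).
    assert (0 <= / a0 * b3) by (apply Rmult_le_pos; lra).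
    lra. }
  assert (ET : c1 * T = 2 * c1 ^ 2 * Y / mu + mu * X / 2).
  { unfold T, d. field. lra. }
  assert (mu * (mu * X) <= mu * (4 * c1 ^ 2 * Y / mu + 2 * c1 * (b1 + b3))) by
    (apply Rmult_le_compat_l; lra).
  replace (mu * (4 * c1 ^ 2 * Y / mu + 2 * c1 * (b1 + b3))) with (4 * c1 ^ 2 * Y + 2 * mu * c1 * (b1 + b3)) in H
    by (field; lra).
  nra.
Qed.


Let Kq := 8 / a0.
Let B := Rpower (Kq * k + 1) (2 / (2 * sigma + 1)).
Let sf t := B + q t.
Let g2 t := Rpower (sf t) sigma.
Let qd t := 2 * (k ^ 2 * t - p).
Let g2' t := sigma * Rpower (sf t) (sigma - 1) * qd t.

Lemma Kq_pos : 0 < Kq.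
Proof. unfold Kq. apply Rdiv_lt_0_compat; lra. Qed.

Lemma B_ge1 : 1 <= B.
Proof.
  unfold B. assert (H := Kq_pos). apply Rle_trans with (Rpower (Kq * k + 1) 0).
  rewrite Rpower_O; nra.
  apply Rpow_mono_exp. nra.
  apply Rlt_le, Rdiv_lt_0_compat; lra.
Qed.

Lemma B_pow : Rpower B (2 * sigma + 1) = (Kq * k + 1) ^ 2.
Proof.
  unfold B. rewrite Rpower_mult. replace (2 / (2 * sigma + 1) * (2 * sigma + 1)) with 2 by (field; lra).
  apply Rpow2. assert (H := Kq_pos); nra.
Qed.

Lemma sf_pos t : 1 <= sf t.
Proof. unfold sf. assert (H := B_ge1). assert (H0 := hq0 t). unfold q. lra. Qed.

Lemma q_deriv t : derivable_pt_lim q t (qd t).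
Proof.
  unfold q, qf, qd. apply d_ext with (0 - (2 * p * 1) + (k ^ 2 * (2 * t * 1))); [|ring].
  apply d_plus. apply d_minus. apply d_const. apply d_scal. apply d_id.
  apply d_scal. apply d_sq. apply d_id.
Qed.

Lemma sf_deriv t : derivable_pt_lim sf t (qd t).
Proof. unfold sf. apply d_ext with (0 + qd t); [|ring]. apply d_plus. apply d_const. apply q_deriv. Qed.

Lemma rpow_comp_deriv e t : derivable_pt_lim (fun t => Rpower (sf t) e) t (e * Rpower (sf t) (e - 1) * qd t).
Proof.
  apply (d_comp sf (fun x => Rpower x e)). apply sf_deriv.
  apply derivable_pt_lim_power. assert (H := sf_pos t). lra.
Qed.

Lemma Cqd : cont qd.
Proof. unfold qd. solve_cont. Qed.

Lemma Crpow e : cont (fun t => Rpower (sf t) e).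
Proof. apply (cont_deriv _ (fun t => e * Rpower (sf t) (e - 1) * qd t)). apply rpow_comp_deriv. Qed.

Lemma abs_of_sq x y : 0 <= y -> x ^ 2 <= y ^ 2 -> Rabs x <= y.
Proof. intros. destruct (Rle_dec (Rabs x) y); auto. exfalso.
  assert (H1 : y < Rabs x) by lra. assert (y ^ 2 < Rabs x ^ 2) by nra. rewrite pow2_abs in H2. lra. Qed.

Lemma P1 t : Rabs (g2' t) <= a0 / 4 * Rpower (sf t) (2 * sigma).
Proof.
  assert (Hs := sf_pos t). assert (HK := Kq_pos).
  set (R := Rpower (sf t) (sigma + 1)). assert (HR : 0 < R) by apply Rpow_pos.
  assert (Hx : Rabs (k ^ 2 * t - p) <= R / Kq).
  { apply abs_of_sq. apply Rlt_le, Rdiv_lt_0_compat; lra.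
    assert (H1 := hcs t).
    assert (Hqs : k ^ 2 * qf c0 p k t <= k ^ 2 * sf t).
    { apply Rmult_le_compat_l. apply pow2_ge_0. unfold sf, q. assert (H := B_ge1). lra. }
    assert (HB : Kq ^ 2 * k ^ 2 <= Rpower (sf t) (2 * sigma + 1)).
    { apply Rle_trans with (Rpower B (2 * sigma + 1)).
      rewrite B_pow. nra. apply Rpow_mono_base. lra. assert (H := B_ge1). lra.
      unfold sf, q. assert (H := hq0 t). lra. }
    assert (ER : (R / Kq) ^ 2 = Rpower (sf t) (2 * sigma + 1) * sf t / Kq ^ 2).
    { unfold R. unfold Rdiv. rewrite Rpow_mult_distr. rewrite Rpow_sq.
      replace (2 * (sigma + 1)) with (2 * sigma + 1 + 1) by ring. rewrite Rpower_plus, Rpow_1 by lra.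
      rewrite pow_inv. ring. }
    rewrite ER.
    assert (k ^ 2 * sf t <= Rpower (sf t) (2 * sigma + 1) * sf t / Kq ^ 2).
    { apply (Rmult_le_reg_l (Kq ^ 2)). nra. unfold Rdiv.
      replace (Kq ^ 2 * (Rpower (sf t) (2 * sigma + 1) * sf t * / Kq ^ 2)) with
        (Rpower (sf t) (2 * sigma + 1) * sf t) by (field; lra). nra. }
    lra. }
  unfold g2', qd. rewrite !Rabs_mult.
  assert (E1 : Rabs sigma = sigma) by (apply Rabs_right; lra).
  assert (E2 : Rabs (Rpower (sf t) (sigma - 1)) = Rpower (sf t) (sigma - 1)) by (apply Rabs_right, Rle_ge, Rlt_le, Rpow_pos).
  assert (E3 : Rabs 2 = 2) by (apply Rabs_right; lra).
  rewrite E1, E2, E3.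
  assert (HP : 0 < Rpower (sf t) (sigma - 1)) by apply Rpow_pos.
  assert (EP : Rpower (sf t) (sigma - 1) * R = Rpower (sf t) (2 * sigma)).
  { unfold R. rewrite <- Rpower_plus. f_equal. ring. }
  assert (sigma * Rpower (sf t) (sigma - 1) * (2 * Rabs (k ^ 2 * t - p)) <=
     sigma * Rpower (sf t) (sigma - 1) * (2 * (R / Kq))).
  { apply Rmult_le_compat_l. nra. lra. }
  assert (E4 : sigma * Rpower (sf t) (sigma - 1) * (2 * (R / Kq)) = sigma * a0 / 4 * Rpower (sf t) (2 * sigma)).
  { rewrite <- EP. unfold Kq. field. lra. }
  assert (0 < Rpower (sf t) (2 * sigma)) by apply Rpow_pos.
  assert (sigma * a0 / 4 * Rpower (sf t) (2 * sigma) <= a0 / 4 * Rpower (sf t) (2 * sigma)).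
  { apply Rmult_le_compat_r. lra. unfold Rdiv. nra. }
  lra.
Qed.

Lemma two_pow e : 0 <= e <= 1 -> Rpower 2 e <= 2.
Proof. intros. rewrite <- (Rpow_1 2) at 2 by lra. apply Rpow_mono_exp; lra. Qed.

Lemma P2 t : Rpower (sf t) (2 * sigma) <= 2 / a0 * m t * g2 t + 4 * Rpower B (2 * sigma).
Proof.
  assert (Hs := sf_pos t). assert (HB := B_ge1). assert (Hm := mpos t).
  assert (Hg : 0 < g2 t) by apply Rpow_pos.
  assert (Hia : 0 < 2 / a0) by (apply Rdiv_lt_0_compat; lra).
  assert (Hmg : 0 <= 2 / a0 * m t * g2 t) by (apply Rmult_le_pos; [apply Rmult_le_pos|]; lra).
  destruct (Rle_dec B (q t)) as [H1|H1].
  - assert (Hq1 : 1 <= q t) by lra.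
    assert (Hm1 := hm1 t Hq1). fold q in Hm1.
    assert (Hsq : Rpower (sf t) sigma <= 2 * Rpower (q t) sigma).
    { apply Rle_trans with (Rpower (2 * q t) sigma).
      apply Rpow_mono_base; try lra. unfold sf. lra.
      rewrite <- Rpower_mult_distr by lra. apply Rmult_le_compat_r. apply Rlt_le, Rpow_pos.
      apply two_pow; lra. }
    assert (E : Rpower (sf t) (2 * sigma) = g2 t * g2 t).
    { unfold g2. rewrite <- Rpower_plus. f_equal. ring. }
    rewrite E.
    assert (g2 t * g2 t <= 2 * Rpower (q t) sigma * g2 t) by (apply Rmult_le_compat_r; unfold g2 in *; lra).
    assert (2 * Rpower (q t) sigma * g2 t <= 2 / a0 * m t * g2 t).
    { apply Rmult_le_compat_r. lra. apply (Rmult_le_reg_l a0); auto.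
      replace (a0 * (2 / a0 * m t)) with (2 * m t) by (field; lra).
      unfold q in *. lra. }
    assert (0 <= Rpower B (2 * sigma)) by (apply Rlt_le, Rpow_pos). lra.
  - assert (Rpower (sf t) (2 * sigma) <= Rpower (2 * B) (2 * sigma)).
    { apply Rpow_mono_base; try lra. unfold sf. lra. }
    rewrite <- Rpower_mult_distr in H by lra.
    assert (Rpower 2 (2 * sigma) <= 4).
    { replace 4 with (Rpower 2 2). apply Rpow_mono_exp; lra. rewrite Rpow2; lra. }
    assert (0 < Rpower B (2 * sigma)) by apply Rpow_pos.
    nra.
Qed.


Lemma g2_deriv t : derivable_pt_lim g2 t (g2' t).
Proof. unfold g2, g2'. apply rpow_comp_deriv. Qed.
Lemma Cg2' : cont g2'.
Proof. unfold g2'. assert (H := Crpow (sigma - 1)). assert (H2 := Cqd). solve_cont. Qed.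
Lemma Cg2 : cont g2.
Proof. apply (cont_deriv g2 g2'). apply g2_deriv. Qed.

Lemma step2 N : 0 <= N ->
  Int (fun t => Rpower (sf t) (2 * sigma) * U t) (-N) N <=
  11 * Int Phi (-N) N / a0 ^ 2 + 6 * Rpower B (2 * sigma) * Int U (-N) N + 3 * bd g2 N / a0.
Proof.
  intros HN. assert (HNN : -N <= N) by lra.
  assert (PI0 := PI_ge1).
  set (d := 8 / a0). assert (Hd : 0 < d) by (unfold d; apply Rdiv_lt_0_compat; lra).
  assert (Hmi := MI ur ui dur dui m g2 g2' N d Hr Hi Cr Ci Cm g2_deriv Cg2' HN Hd).
  fold U Phi in Hmi.
  replace (fun t => g2 t ^ 2 * U t) with (fun t => Rpower (sf t) (2 * sigma) * U t) in Hmi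
    by (apply functional_extensionality; intros; unfold g2; rewrite Rpow_sq; auto).
  set (X := Int U (-N) N) in *. set (Y := Int Phi (-N) N) in *.
  set (Z := Int (fun t => Rpower (sf t) (2 * sigma) * U t) (-N) N) in *.
  set (Mg := Int (fun t => m t * g2 t * U t) (-N) N) in *.
  set (G := Int (fun t => g2' t * U t) (-N) N) in *.
  set (b2 := bd g2 N).
  assert (Eb : / (4 * PI) * Rabs (g2 N * U N - g2 (- N) * U (- N)) = b2) by reflexivity.
  rewrite Eb in Hmi.
  assert (CsU : cont (fun t => Rpower (sf t) (2 * sigma) * U t)) by (apply cont_mult; [apply Crpow|apply CU]).
  assert (HX : 0 <= X) by (apply Int_nonneg; auto; [apply CU | intros; apply Upos]).
  assert (HY : 0 <= Y) by (apply Int_nonneg; auto; [apply CPhi | intros; unfold Phi, Phif;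
     apply Rplus_le_le_0_compat; apply pow2_ge_0]).
  assert (HZ : 0 <= Z) by (apply Int_nonneg; auto; intros; apply Rmult_le_pos; [apply Rlt_le, Rpow_pos|apply Upos]).
  assert (Hb2 : 0 <= b2) by apply bd_pos.
  assert (HG : G <= a0 / 4 * Z).
  { unfold G, Z. rewrite <- Int_scal; auto. apply Int_mono; auto.
    - apply cont_mult; [apply Cg2'|apply CU].
    - apply cont_mult; auto. apply cont_const.
    - intros t _. assert (H1 := P1 t). assert (H2 := Upos t). assert (H3 := Rle_abs (g2' t)).
      assert (g2' t <= a0 / 4 * Rpower (sf t) (2 * sigma)) by lra.
      rewrite <- Rmult_assoc. apply Rmult_le_compat_r; auto. }
  assert (Hr4 : 0 < / (4 * PI)) by (apply Rinv_0_lt_compat; lra).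
  assert (Hr4' : / (4 * PI) <= / 4) by (apply Rinv_le_contravar; lra).
  assert (HrG : / (4 * PI) * G <= a0 / 16 * Z).
  { destruct (Rle_dec 0 G).
    - apply Rle_trans with (/ 4 * G). apply Rmult_le_compat_r; auto.
      assert (/4 * G <= / 4 * (a0 / 4 * Z)) by (apply Rmult_le_compat_l; lra). lra.
    - assert (/ (4 * PI) * G <= 0). { assert (0 <= / (4 * PI) * (- G)) by (apply Rmult_le_pos; lra). lra. }
      assert (0 <= a0 / 16 * Z) by (apply Rmult_le_pos; [unfold Rdiv; nra|lra]). lra. }
  assert (HMg : Mg <= 4 * Y / a0 + a0 / 8 * Z + b2).
  { assert (E1 : d * Y = 8 * Y / a0) by (unfold d; field; lra).
    assert (E2 : Z / d = a0 / 8 * Z) by (unfold d; field; lra).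
    rewrite E1, E2 in Hmi.
    assert (E3 : (8 * Y / a0 + a0 / 8 * Z) / 2 = 4 * Y / a0 + a0 / 16 * Z) by (field; lra).
    rewrite E3 in Hmi. lra. }
  assert (HZ2 : Z <= 2 / a0 * Mg + 4 * Rpower B (2 * sigma) * X).
  { unfold Z, Mg, X. rewrite <- (Int_scal (fun t => m t * g2 t * U t)); auto.
    rewrite <- (Int_scal U); auto. rewrite <- Int_plus; auto.
    - apply Int_mono; auto.
      + apply cont_plus; apply cont_mult; try apply cont_const. apply cont_mult; auto. apply cont_mult; auto.
        apply Cg2. apply CU. apply CU.
      + intros t _. assert (H1 := P2 t). assert (H2 := Upos t).
        assert (E : 2 / a0 * (m t * g2 t * U t) + 4 * Rpower B (2 * sigma) * U t =
           (2 / a0 * m t * g2 t + 4 * Rpower B (2 * sigma)) * U t) by ring.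
        rewrite E. apply Rmult_le_compat_r; auto.
    - apply cont_mult; [apply cont_const|]. apply cont_mult; [apply cont_mult; auto; apply Cg2|apply CU].
    - apply cont_mult; [apply cont_const|apply CU].
    - apply CU.
    - apply cont_mult; [apply cont_mult; auto; apply Cg2|apply CU]. }
  assert (HZ3 : 2 / a0 * Mg <= 8 * Y / a0 ^ 2 + Z / 4 + 2 * b2 / a0).
  { assert (2 / a0 * Mg <= 2 / a0 * (4 * Y / a0 + a0 / 8 * Z + b2)).
    { apply Rmult_le_compat_l; auto. apply Rlt_le, Rdiv_lt_0_compat; lra. }
    assert (E : 2 / a0 * (4 * Y / a0 + a0 / 8 * Z + b2) = 8 * Y / a0 ^ 2 + Z / 4 + 2 * b2 / a0) by (field; lra).
    lra. }
  assert (Hy : 0 <= Y / a0 ^ 2) by (unfold Rdiv; apply Rmult_le_pos; auto; apply Rlt_le, Rinv_0_lt_compat; nra).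
  assert (Hbb : 0 <= b2 / a0) by (unfold Rdiv; apply Rmult_le_pos; auto; apply Rlt_le, Rinv_0_lt_compat; nra).
  assert (HBX : 0 <= Rpower B (2 * sigma) * X) by (apply Rmult_le_pos; auto; apply Rlt_le, Rpow_pos).
  assert (E1 : 8 * Y / a0 ^ 2 = 8 * (Y / a0 ^ 2)) by (unfold Rdiv; ring).
  assert (E2 : 11 * Y / a0 ^ 2 = 11 * (Y / a0 ^ 2)) by (unfold Rdiv; ring).
  assert (E3 : 2 * b2 / a0 = 2 * (b2 / a0)) by (unfold Rdiv; ring).
  assert (E4 : 3 * b2 / a0 = 3 * (b2 / a0)) by (unfold Rdiv; ring).
  assert (E5 : 4 * Rpower B (2 * sigma) * X = 4 * (Rpower B (2 * sigma) * X)) by ring.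
  assert (E6 : 6 * Rpower B (2 * sigma) * X = 6 * (Rpower B (2 * sigma) * X)) by ring.
  lra.
Qed.


Let kap := Rpower (1 + k ^ 2) gam.
Let W t := 1 + kap + Rpower (1 + q t) (2 * sigma).
Let K0 := 3 + 6 * (Kq + 1) ^ 2 + 11 / a0 ^ 2 + (2 + 6 * (Kq + 1) ^ 2) * 4 * c1 ^ 2.
Let L := (2 + 6 * (Kq + 1) ^ 2) * 2 * mu * c1 + 3 / a0.

Lemma gam_lt1 : gam < 1.
Proof. unfold gam. apply (Rmult_lt_reg_r (2 * sigma + 1)). lra. field_simplify; lra. Qed.

Lemma RB_eq : Rpower B (2 * sigma) = Rpower (Kq * k + 1) (2 * gam).
Proof. unfold B. rewrite Rpower_mult. f_equal. unfold gam. field. lra. Qed.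

Lemma RB_bound_hi : 1 <= k -> Rpower B (2 * sigma) <= (Kq + 1) ^ 2 * mu ^ 2.
Proof.
  intros hk1. rewrite RB_eq. assert (HK := Kq_pos). assert (G := gam_lt1). destruct gam_bounds as [G1 _].
  apply Rle_trans with (Rpower ((Kq + 1) * k) (2 * gam)).
  apply Rpow_mono_base; nra.
  rewrite <- Rpower_mult_distr by nra. unfold mu. rewrite Rpow_sq.
  apply Rmult_le_compat_r. apply Rlt_le, Rpow_pos.
  rewrite <- Rpow2 by lra. apply Rpow_mono_exp; lra.
Qed.

Lemma RB_bound_lo : k <= 1 -> Rpower B (2 * sigma) <= (Kq + 1) ^ 2.
Proof.
  intros hk1. rewrite RB_eq. assert (HK := Kq_pos). assert (G := gam_lt1). destruct gam_bounds as [G1 _].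
  apply Rle_trans with (Rpower (Kq + 1) (2 * gam)).
  apply Rpow_mono_base; nra.
  rewrite <- Rpow2 by lra. apply Rpow_mono_exp; lra.
Qed.

Lemma kap_hi : 1 <= k -> kap <= 2 * mu ^ 2.
Proof.
  intros hk1. unfold kap. assert (G := gam_lt1). destruct gam_bounds as [G1 _].
  apply Rle_trans with (Rpower (2 * k ^ 2) gam). apply Rpow_mono_base; nra.
  rewrite <- Rpower_mult_distr by nra. unfold mu. rewrite Rpow_sq.
  rewrite <- Rpow2 by lra. rewrite Rpower_mult.
  apply Rmult_le_compat_r. apply Rlt_le, Rpow_pos. apply two_pow; lra.
Qed.

Lemma kap_lo : k <= 1 -> kap <= 2.
Proof.
  intros hk1. unfold kap. assert (G := gam_lt1). destruct gam_bounds as [G1 _].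
  apply Rle_trans with (Rpower 2 gam). apply Rpow_mono_base; nra. apply two_pow; lra.
Qed.



Lemma CW : cont W.
Proof.
  unfold W. intros x. apply cont_plus. apply cont_const.
  intros y. apply (continuity_pt_comp (fun t => 1 + q t) (fun y => Rpower y (2 * sigma))).
  apply cont_plus. apply cont_const. apply Cq.
  apply derivable_continuous_pt. exists ((2 * sigma) * Rpower (1 + q y) (2 * sigma - 1)).
  apply derivable_pt_lim_power. assert (H := hq0 y). unfold q. lra.
Qed.

Lemma interval N : 0 <= N ->
  Int (fun t => W t * U t) (-N) N <= K0 * (Int Phi (-N) N + Int U (-N) N)
     + L * (bd (fun _ => 1) N + bd g2 N + bd g3 N).
Proof.
  intros HN. assert (HNN : -N <= N) by lra.
  assert (HS2 := step2 N HN).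
  set (X := Int U (-N) N) in *. set (Y := Int Phi (-N) N) in *.
  set (Z := Int (fun t => Rpower (sf t) (2 * sigma) * U t) (-N) N) in *.
  set (b1 := bd (fun _ => 1) N). set (b2 := bd g2 N) in *. set (b3 := bd g3 N).
  assert (HX : 0 <= X) by (apply Int_nonneg; auto; [apply CU | intros; apply Upos]).
  assert (HY : 0 <= Y) by (apply Int_nonneg; auto; [apply CPhi | intros; unfold Phi, Phif;
     apply Rplus_le_le_0_compat; apply pow2_ge_0]).
  assert (Hb1 : 0 <= b1) by apply bd_pos. assert (Hb2 : 0 <= b2) by apply bd_pos.
  assert (Hb3 : 0 <= b3) by apply bd_pos.
  assert (Hkap : 0 < kap) by apply Rpow_pos.
  assert (HW : Int (fun t => W t * U t) (-N) N <= (1 + kap) * X + Z).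
  { unfold X, Z. rewrite <- Int_scal; auto; [|apply CU]. rewrite <- Int_plus; auto.
    - apply Int_mono; auto.
      + apply cont_mult; [apply CW|apply CU].
      + apply cont_plus; apply cont_mult; try apply cont_const; try apply CU. apply Crpow.
      + intros t _. assert (H := Upos t). unfold W.
        assert (Rpower (1 + q t) (2 * sigma) <= Rpower (sf t) (2 * sigma)).
        { apply Rpow_mono_base. lra. assert (H0 := hq0 t). unfold q. lra.
          unfold sf. assert (H0 := B_ge1). lra. }
        nra.
    - apply cont_mult; [apply cont_const|apply CU].
    - apply cont_mult; [apply Crpow|apply CU]. }
  assert (HRB : 0 <= Rpower B (2 * sigma)) by (apply Rlt_le, Rpow_pos).
  assert (HK := Kq_pos).
  assert (Hc1 : 0 < c1) by (unfold c1; assert (0 < / a0) by (apply Rinv_0_lt_compat; lra); assert (HPI := PI_RGT_0); lra).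
  assert (Hmu : 0 < mu) by apply Rpow_pos.
  assert (Hia : 0 < / a0) by (apply Rinv_0_lt_compat; lra).
  assert (Hy : 0 <= Y / a0 ^ 2) by (unfold Rdiv; apply Rmult_le_pos; auto; apply Rlt_le, Rinv_0_lt_compat; nra).
  assert (Hbb : 0 <= b2 / a0) by (unfold Rdiv; apply Rmult_le_pos; auto; lra).
  assert (E2 : 11 * Y / a0 ^ 2 = 11 * (Y / a0 ^ 2)) by (unfold Rdiv; ring).
  assert (E4 : 3 * b2 / a0 = 3 * (b2 / a0)) by (unfold Rdiv; ring).
  assert (EK0 : K0 * (Y + X) = (3 + 6 * (Kq + 1) ^ 2) * X + 11 * (Y / a0 ^ 2) + (2 + 6 * (Kq + 1) ^ 2) * 4 * c1 ^ 2 * X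
     + (3 + 6 * (Kq + 1) ^ 2) * Y + (2 + 6 * (Kq + 1) ^ 2) * 4 * c1 ^ 2 * Y + 11 / a0 ^ 2 * X) by (unfold K0; field; lra).
  assert (Ha1 : 0 <= 11 / a0 ^ 2 * X) by (apply Rmult_le_pos; auto; unfold Rdiv; apply Rmult_le_pos; [lra|apply Rlt_le, Rinv_0_lt_compat; nra]).
  assert (Ha2 : 0 <= (2 + 6 * (Kq + 1) ^ 2) * 4 * c1 ^ 2 * X)  by pos.
  assert (Ha3 : 0 <= (2 + 6 * (Kq + 1) ^ 2) * 4 * c1 ^ 2 * Y) by pos.
  assert (Ha4 : 0 <= (3 + 6 * (Kq + 1) ^ 2) * Y) by pos.
  assert (EL : L * (b1 + b2 + b3) = (2 + 6 * (Kq + 1) ^ 2) * 2 * mu * c1 * (b1 + b3) + 3 * (b2 / a0)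
     + (2 + 6 * (Kq + 1) ^ 2) * 2 * mu * c1 * b2 + 3 / a0 * (b1 + b3)) by (unfold L; field; lra).
  assert (Hl1 : 0 <= (2 + 6 * (Kq + 1) ^ 2) * 2 * mu * c1 * b2) by pos.
  assert (Hl2 : 0 <= 3 / a0 * (b1 + b3)) by (apply Rmult_le_pos; [unfold Rdiv; nra| lra]).
  assert (Hl3 : 0 <= (2 + 6 * (Kq + 1) ^ 2) * 2 * mu * c1 * (b1 + b3)) by pos.
  destruct (Rle_dec 1 k) as [hk1|hk1].
  - assert (H3 := step3 N hk1 HN). fold X Y b1 b3 in H3.
    assert (Hk := kap_hi hk1). assert (HB := RB_bound_hi hk1).
    assert (HBX : Rpower B (2 * sigma) * X <= (Kq + 1) ^ 2 * (mu ^ 2 * X)).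
    { rewrite <- Rmult_assoc. apply Rmult_le_compat_r; auto. }
    assert (HkX : kap * X <= 2 * (mu ^ 2 * X)) by nra.
    assert (Hm2 : 0 <= mu ^ 2 * X) by (apply Rmult_le_pos; auto; nra).
    assert (HT : (2 + 6 * (Kq + 1) ^ 2) * (mu ^ 2 * X) <= (2 + 6 * (Kq + 1) ^ 2) * (4 * c1 ^ 2 * Y + 2 * mu * c1 * (b1 + b3))).
    { apply Rmult_le_compat_l; auto; nra. }
    assert (E6 : 6 * Rpower B (2 * sigma) * X = 6 * (Rpower B (2 * sigma) * X)) by ring.
    assert (E7 : (2 + 6 * (Kq + 1) ^ 2) * (4 * c1 ^ 2 * Y + 2 * mu * c1 * (b1 + b3)) =
       (2 + 6 * (Kq + 1) ^ 2) * 4 * c1 ^ 2 * Y + (2 + 6 * (Kq + 1) ^ 2) * 2 * mu * c1 * (b1 + b3)) by ring.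
    assert (E8 : (1 + kap) * X = X + kap * X) by ring.
    assert (E9 : (2 + 6 * (Kq + 1) ^ 2) * (mu ^ 2 * X) = 2 * (mu ^ 2 * X) + 6 * ((Kq + 1) ^ 2 * (mu ^ 2 * X))) by ring.
    assert (0 <= (2 + 6 * (Kq + 1) ^ 2) * X) by pos.
    lra.
  - assert (hk1' : k <= 1) by lra.
    assert (Hk := kap_lo hk1'). assert (HB := RB_bound_lo hk1').
    assert (HBX : Rpower B (2 * sigma) * X <= (Kq + 1) ^ 2 * X) by (apply Rmult_le_compat_r; auto).
    assert (HkX : kap * X <= 2 * X) by nra.
    assert (E6 : 6 * Rpower B (2 * sigma) * X = 6 * (Rpower B (2 * sigma) * X)) by ring.
    assert (E8 : (1 + kap) * X = X + kap * X) by ring.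
    assert (E10 : (3 + 6 * (Kq + 1) ^ 2) * X = 3 * X + 6 * ((Kq + 1) ^ 2 * X)) by ring.
    lra.
Qed.


Lemma K0_pos : 0 < K0.
Proof.
  unfold K0. assert (HK := Kq_pos).
  assert (0 <= 11 / a0 ^ 2) by (unfold Rdiv; pos).
  assert (0 <= (2 + 6 * (Kq + 1) ^ 2) * 4 * c1 ^ 2) by pos.
  assert (0 <= 6 * (Kq + 1) ^ 2) by pos. lra.
Qed.

Lemma Wpos t : 0 <= W t.
Proof. unfold W. assert (H1 := Rpow_pos (1 + k ^ 2) gam). assert (H2 := Rpow_pos (1 + q t) (2 * sigma)).
  unfold kap. lra. Qed.

Lemma g2_bound t : Rabs (g2 t) <= (B + Rabs c0 + Rabs p + k ^ 2) * (1 + t ^ 2).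
Proof.
  assert (Hs := sf_pos t). unfold g2.
  rewrite Rabs_right by (apply Rle_ge, Rlt_le, Rpow_pos).
  apply Rle_trans with (sf t).
  { rewrite <- (Rpow_1 (sf t)) at 2 by lra. apply Rpow_mono_exp; lra. }
  unfold sf, q, qf. assert (HB := B_ge1).
  assert (H1 : c0 <= Rabs c0) by apply Rle_abs.
  assert (H2 : - (2 * p * t) <= Rabs p * (1 + t ^ 2)).
  { assert (- (2 * p * t) <= 2 * Rabs p * Rabs t).
    { assert (E : Rabs (2 * p * t) = 2 * Rabs p * Rabs t) by (rewrite !Rabs_mult, (Rabs_right 2) by lra; ring).
      rewrite <- E, <- Rabs_Ropp. apply Rle_abs. }
    assert (2 * Rabs t <= 1 + t ^ 2). { rewrite <- (pow2_abs t). assert (0 <= (Rabs t - 1) ^ 2) by apply pow2_ge_0. nra. }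
    assert (0 <= Rabs p) by apply Rabs_pos. nra. }
  assert (0 <= Rabs c0) by apply Rabs_pos. assert (0 <= Rabs p) by apply Rabs_pos.
  assert (0 <= k ^ 2) by apply pow2_ge_0. assert (0 <= t ^ 2) by apply pow2_ge_0.
  nra.
Qed.

Lemma CWU : cont (fun t => W t * U t).
Proof. apply cont_mult; [apply CW | apply CU]. Qed.

Lemma final_est : decay ur -> decay ui -> forall YB XU,
  (forall N, 0 <= N -> Int Phi (-N) N <= YB) -> (forall N, 0 <= N -> Int U (-N) N <= XU) ->
  forall N0, 0 <= N0 -> Int (fun t => W t * U t) (-N0) N0 <= K0 * (YB + XU).
Proof.
  intros Dr Di YB XU HYB HXU N0 HN0.
  apply Rnot_lt_le. intros Hlt.
  set (eps := Int (fun t => W t * U t) (-N0) N0 - K0 * (YB + XU)).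
  assert (Heps : 0 < eps) by (unfold eps; lra).
  set (Lp := Rabs L + 1). assert (HLp : 0 < Lp) by (unfold Lp; assert (H := Rabs_pos L); lra).
  set (eta := eps / (4 * Lp)). assert (Heta : 0 < eta) by (unfold eta; apply Rdiv_lt_0_compat; lra).
  destruct (bd_small ur ui (fun _ => 1) 1 Dr Di ltac:(lra)
    ltac:(intros t; cbv beta; rewrite Rabs_R1; assert (0 <= t ^ 2) by apply pow2_ge_0; lra) eta Heta) as [N1 [HN1 H1]].
  assert (HG2 : 0 <= B + Rabs c0 + Rabs p + k ^ 2).
  { assert (H := B_ge1). assert (0 <= Rabs c0) by apply Rabs_pos. assert (0 <= Rabs p) by apply Rabs_pos.
    assert (0 <= k ^ 2) by apply pow2_ge_0. lra. }
  destruct (bd_small ur ui g2 _ Dr Di HG2 g2_bound eta Heta) as [N2 [HN2 H2]].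
  destruct (bd_small ur ui g3 2 Dr Di ltac:(lra)
    ltac:(intros t; assert (H := g3_bound t); assert (0 <= t ^ 2) by apply pow2_ge_0;
          apply Rabs_le; lra) eta Heta) as [N3 [HN3 H3]].
  set (N := Rmax N0 (Rmax N1 (Rmax N2 N3))).
  assert (HN0N : N0 <= N) by (unfold N; apply Rmax_l).
  assert (HN1N : N1 <= N) by (unfold N; eapply Rle_trans; [|apply Rmax_r]; apply Rmax_l).
  assert (HN2N : N2 <= N) by (unfold N; eapply Rle_trans; [|apply Rmax_r]; eapply Rle_trans; [|apply Rmax_r]; apply Rmax_l).
  assert (HN3N : N3 <= N) by (unfold N; eapply Rle_trans; [|apply Rmax_r]; eapply Rle_trans; [|apply Rmax_r]; apply Rmax_r).
  assert (HN : 0 <= N) by lra.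
  assert (CWU : cont (fun t => W t * U t)) by (apply cont_mult; [apply CW | apply CU]).
  assert (Hg := Int_grow _ N0 N CWU HN0 HN0N ltac:(intros; apply Rmult_le_pos; [apply Wpos|apply Upos])).
  assert (Hin := interval N HN).
  assert (HY := HYB N HN). assert (HX := HXU N HN). assert (HK := K0_pos).
  assert (HKY : K0 * (Int Phi (- N) N + Int U (- N) N) <= K0 * (YB + XU)) by (apply Rmult_le_compat_l; lra).
  assert (PI1 := PI_ge1).
  assert (Hr4 : 0 < / (4 * PI) <= 1).
  { split. apply Rinv_0_lt_compat; lra. rewrite <- Rinv_1. apply Rinv_le_contravar; lra. }
  assert (Hbd : forall g, Rabs (g N * U N - g (-N) * U (-N)) <= eta -> 0 <= bd g N <= eta).
  { intros g Hgg. split. apply bd_pos. unfold bd.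
    assert (0 <= Rabs (g N * U N - g (-N) * U (-N))) by apply Rabs_pos. nra. }
  assert (B1 := Hbd (fun _ => 1) (H1 N HN1N)). assert (B2 := Hbd g2 (H2 N HN2N)). assert (B3 := Hbd g3 (H3 N HN3N)).
  assert (HL : L * (bd (fun _ => 1) N + bd g2 N + bd g3 N) <= Lp * (3 * eta)).
  { apply Rle_trans with (Rabs L * (bd (fun _ => 1) N + bd g2 N + bd g3 N)).
    apply Rmult_le_compat_r. lra. apply Rle_abs.
    apply Rmult_le_compat. apply Rabs_pos. lra. unfold Lp; lra. lra. }
  assert (E : Lp * (3 * eta) = 3 * eps / 4) by (unfold eta; field; lra).
  unfold eps in E. lra.
Qed.

End Core.

Definition K0f a0 := 3 + 6 * (8 / a0 + 1) ^ 2 + 11 / a0 ^ 2 + (2 + 6 * (8 / a0 + 1) ^ 2) * 4 * (32 * PI + / a0) ^ 2.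
Lemma K0f_pos a0 : 0 < a0 -> 0 < K0f a0.
Proof. intros. unfold K0f. assert (0 <= 11 / a0 ^ 2) by (unfold Rdiv; pos).
  assert (0 <= (2 + 6 * (8 / a0 + 1) ^ 2) * 4 * (32 * PI + / a0) ^ 2) by pos.
  assert (0 <= 6 * (8 / a0 + 1) ^ 2) by pos. lra. Qed.

Lemma fsum_ext n (f g : Fin.t n -> R) : (forall i, f i = g i) -> fsum n f = fsum n g.
Proof. revert f g; induction n; intros f g H; simpl; auto. rewrite H, (IHn (fun i => f (Fin.FS i)) (fun i => g (Fin.FS i))); auto. Qed.

Lemma fsum_plus n (f g : Fin.t n -> R) : fsum n (fun i => f i + g i) = fsum n f + fsum n g.
Proof. revert f g; induction n; intros f g; simpl. ring. rewrite IHn. ring. Qed.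

Lemma fsum_scal n c (f : Fin.t n -> R) : fsum n (fun i => c * f i) = c * fsum n f.
Proof. revert f; induction n; intros f; simpl. ring. rewrite IHn. ring. Qed.

Lemma fsum_nonneg n (f : Fin.t n -> R) : (forall i, 0 <= f i) -> 0 <= fsum n f.
Proof. revert f; induction n; intros f H; simpl. lra. assert (H1 := H Fin.F1).
  assert (0 <= fsum n (fun i => f (Fin.FS i))) by (apply IHn; auto). lra. Qed.

Lemma fsum_coord n (f : Fin.t n -> R) : (forall i, 0 <= f i) -> forall i, f i <= fsum n f.
Proof.
  revert f; induction n; intros f H i. inversion i.
  simpl. apply (Fin.caseS' i (fun i => f i <= f Fin.F1 + fsum n (fun i => f (Fin.FS i)))).
  - assert (0 <= fsum n (fun i => f (Fin.FS i))) by (apply fsum_nonneg; auto). lra.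
  - intros j. assert (H1 := H Fin.F1). assert (IH := IHn (fun i => f (Fin.FS i)) (fun i => H _) j). lra.
Qed.

Lemma fsum_zero n : fsum n (fun _ => 0) = 0.
Proof. induction n; simpl; auto. rewrite IHn; ring. Qed.

Lemma CS n (x y : Fin.t n -> R) :
  (fsum n (fun i => x i * y i)) ^ 2 <= fsum n (fun i => x i ^ 2) * fsum n (fun i => y i ^ 2).
Proof.
  set (A := fsum n (fun i => x i ^ 2)). set (S := fsum n (fun i => x i * y i)).
  set (Bv := fsum n (fun i => y i ^ 2)).
  assert (Hq : forall l, 0 <= l ^ 2 * A - 2 * l * S + Bv).
  { intros l. assert (E : fsum n (fun i => (l * x i - y i) ^ 2) = l ^ 2 * A - 2 * l * S + Bv).
    { unfold A, S, Bv.
      rewrite (fsum_ext n _ (fun i => (l ^ 2 * x i ^ 2 + (-2 * l) * (x i * y i)) + y i ^ 2)) by (intros; ring).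
      rewrite !fsum_plus, !fsum_scal. ring. }
    rewrite <- E. apply fsum_nonneg. intros; apply pow2_ge_0. }
  assert (HA : 0 <= A) by (apply fsum_nonneg; intros; apply pow2_ge_0).
  destruct (Rle_lt_or_eq_dec 0 A HA) as [HA'|HA'].
  - assert (H := Hq (S / A)).
    assert (E : (S / A) ^ 2 * A - 2 * (S / A) * S + Bv = Bv - S ^ 2 / A) by (field; lra).
    rewrite E in H. assert (S ^ 2 / A <= Bv) by lra.
    apply (Rmult_le_compat_r A) in H0; [|lra]. unfold Rdiv in H0.
    rewrite Rmult_assoc, Rinv_l in H0 by lra. lra.
  - rewrite <- HA'. rewrite Rmult_0_l.
    destruct (Req_dec S 0) as [HS|HS]. rewrite HS. lra.
    assert (HB : 0 <= Bv) by (apply fsum_nonneg; intros; apply pow2_ge_0).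
    assert (H := Hq ((Bv + 1) / (2 * S))). rewrite <- HA' in H.
    assert (E : ((Bv + 1) / (2 * S)) ^ 2 * 0 - 2 * ((Bv + 1) / (2 * S)) * S + Bv = -1) by (field; auto).
    lra.
Qed.

Lemma vnorm_sq n (x : vec n) : vnorm x ^ 2 = fsum n (fun i => x i ^ 2).
Proof. unfold vnorm. rewrite <- Rsqr_pow2. apply Rsqr_sqrt. apply fsum_nonneg; intros; apply pow2_ge_0. Qed.

Lemma vnorm_nonneg n (x : vec n) : 0 <= vnorm x.
Proof. unfold vnorm. apply sqrt_pos. Qed.

Lemma coord_le n (x : vec n) i : Rabs (x i) <= vnorm x.
Proof.
  apply abs_of_sq. apply vnorm_nonneg. rewrite vnorm_sq.
  apply (fsum_coord n (fun i => x i ^ 2)). intros; apply pow2_ge_0.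
Qed.

Section Q.
Variables (n : nat) (x1 x2 : vec n).
Definition kk := vnorm x1.
Definition pp := fsum n (fun i => x1 i * x2 i).
Definition cc := fsum n (fun i => x2 i ^ 2).

Lemma q_expand t : vnorm (vsub x2 (vscal t x1)) ^ 2 = qf cc pp kk t.
Proof.
  rewrite vnorm_sq. unfold qf, cc, pp, kk. rewrite vnorm_sq.
  unfold vsub, vscal.
  rewrite (fsum_ext n _ (fun i => (x2 i ^ 2 + (-2 * t) * (x1 i * x2 i)) + t ^ 2 * x1 i ^ 2)) by (intros; ring).
  rewrite !fsum_plus, !fsum_scal. ring.
Qed.

Lemma q_nonneg t : 0 <= qf cc pp kk t.
Proof. rewrite <- q_expand. apply pow2_ge_0. Qed.

Lemma q_cs t : (kk ^ 2 * t - pp) ^ 2 <= kk ^ 2 * qf cc pp kk t.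
Proof.
  rewrite <- q_expand. unfold kk. rewrite !vnorm_sq. unfold pp.
  assert (E : fsum n (fun i => x1 i ^ 2) * t - fsum n (fun i => x1 i * x2 i) =
     - fsum n (fun i => x1 i * vsub x2 (vscal t x1) i)).
  { unfold vsub, vscal.
    rewrite (fsum_ext n (fun i => x1 i * (x2 i - t * x1 i)) (fun i => (x1 i * x2 i) + (- t) * x1 i ^ 2)) by (intros; ring).
    rewrite fsum_plus, !fsum_scal. ring. }
  rewrite E. replace ((- fsum n (fun i => x1 i * vsub x2 (vscal t x1) i)) ^ 2) with
    ((fsum n (fun i => x1 i * vsub x2 (vscal t x1) i)) ^ 2) by ring.
  apply CS.
Qed.
End Q.

Lemma cont_pt_intro f x : (forall eps, 0 < eps -> exists d, 0 < d /\ forall y, Rabs (y - x) < d -> Rabs (f y - f x) < eps) ->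
  continuity_pt f x.
Proof.
  intros H. unfold continuity_pt, continue_in, limit1_in, limit_in. intros eps Heps.
  destruct (H eps Heps) as [d [Hd Hy]]. exists d. split; auto.
  intros y [_ Hyd]. simpl in *. unfold R_dist in *. apply Hy; auto.
Qed.

Lemma cont_pt_elim f x : continuity_pt f x -> forall eps, 0 < eps -> exists d, 0 < d /\ forall y, Rabs (y - x) < d -> Rabs (f y - f x) < eps.
Proof.
  intros H eps Heps. unfold continuity_pt, continue_in, limit1_in, limit_in in H.
  destruct (H eps Heps) as [d [Hd Hy]]. exists d. split; auto. intros y Hyx.
  destruct (Req_dec y x) as [E|E]. subst. rewrite Rminus_diag, Rabs_R0. auto.
  apply (Hy y). split. split; [exact I | auto]. simpl. unfold R_dist. auto.
Qed.

Lemma lip_cont f Lc : (forall x y, Rabs (f x - f y) <= Lc * Rabs (x - y)) -> cont f.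
Proof.
  intros H x. apply cont_pt_intro. intros eps Heps.
  assert (HL : 0 <= Lc). { assert (H1 := H 1 0). assert (0 <= Rabs (f 1 - f 0)) by apply Rabs_pos.
    rewrite Rminus_0_r, Rabs_R1 in H1. lra. }
  exists (eps / (Lc + 1)). split. apply Rdiv_lt_0_compat; lra.
  intros y Hy. apply Rle_lt_trans with (Lc * Rabs (y - x)). apply H.
  apply Rle_lt_trans with ((Lc + 1) * Rabs (y - x)). assert (0 <= Rabs (y - x)) by apply Rabs_pos. nra.
  apply (Rmult_lt_compat_l (Lc + 1)) in Hy; [|lra].
  replace ((Lc + 1) * (eps / (Lc + 1))) with eps in Hy by (field; lra). lra.
Qed.

Lemma cont_local f g x0 : continuity_pt g x0 -> (exists d, 0 < d /\ forall x, Rabs (x - x0) < d -> f x = g x) ->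
  continuity_pt f x0.
Proof.
  intros Hg [d [Hd Hfg]]. apply cont_pt_intro. intros eps Heps.
  destruct (cont_pt_elim g x0 Hg eps Heps) as [d' [Hd' H']].
  exists (Rmin d d'). split. apply Rmin_pos; auto.
  intros y Hy. rewrite (Hfg y), (Hfg x0). apply H'. assert (H1 := Rmin_r d d'). lra.
  rewrite Rminus_diag, Rabs_R0; auto. assert (H1 := Rmin_l d d'). lra.
Qed.

Lemma cont_rpow e : 0 < e -> cont (fun x => rpow x e).
Proof.
  intros He x0. destruct (Rle_dec x0 0) as [H0|H0].
  - apply cont_pt_intro. intros eps Heps.
    exists (Rpower eps (/ e)). split. apply Rpow_pos.
    intros y Hy. unfold rpow. destruct (Rle_dec x0 0) as [_|]; [|lra]. rewrite Rminus_0_r.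
    destruct (Rle_dec y 0) as [Hy0|Hy0].
    + rewrite Rabs_R0; auto.
    + rewrite Rabs_right by (apply Rle_ge, Rlt_le, Rpow_pos).
      (* y <= |y - x0| since x0 <= 0 < y *)
      assert (Hy' : y < Rpower eps (/ e)).
      { apply Rle_lt_trans with (Rabs (y - x0)); auto. rewrite Rabs_right by lra. lra. }
      apply Rlt_le_trans with (Rpower (Rpower eps (/ e)) e).
      apply Rlt_Rpower_l; lra.
      rewrite Rpower_mult. rewrite Rinv_l by lra. rewrite Rpow_1 by lra. lra.
  - assert (Hx0 : 0 < x0) by lra.
    apply (cont_local _ (fun x => Rpower x e)).
    + apply derivable_continuous_pt. exists (e * Rpower x0 (e - 1)). apply derivable_pt_lim_power; auto.
    + exists x0. split; auto. intros x Hx. unfold rpow.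
      destruct (Rle_dec x 0); auto. exfalso. assert (H := Rabs_left1 (x - x0)). 
      assert (x - x0 <= 0) by lra. rewrite H in Hx; lra.
Qed.

Lemma cont_w_line n (w : vec n -> R) (hw : continuous_vec w) (x1 x2 : vec n) :
  cont (fun t => w (vsub x2 (vscal t x1))).
Proof.
  intros t. apply cont_pt_intro. intros eps Heps.
  destruct (hw (vsub x2 (vscal t x1)) eps Heps) as [d [Hd H]].
  assert (Hv := vnorm_nonneg n x1).
  exists (d / (vnorm x1 + 1)). split. apply Rdiv_lt_0_compat; lra.
  intros t' Ht'. apply H. intros i. unfold vsub, vscal.
  replace (x2 i - t' * x1 i - (x2 i - t * x1 i)) with (- ((t' - t) * x1 i)) by ring.
  rewrite Rabs_Ropp, Rabs_mult. assert (Hc := coord_le n x1 i).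
  assert (H0 : 0 <= Rabs (t' - t)) by apply Rabs_pos.
  apply (Rmult_lt_compat_l (vnorm x1 + 1)) in Ht'; [|lra].
  replace ((vnorm x1 + 1) * (d / (vnorm x1 + 1))) with d in Ht' by (field; lra).
  assert (Rabs (t' - t) * Rabs (x1 i) <= Rabs (t' - t) * vnorm x1) by (apply Rmult_le_compat_l; auto).
  nra.
Qed.

Lemma move0 n (p : R * vec n * vec n) d : move3 p d 0 = p.
Proof.
  destruct p as [[t xi] eta]. destruct d as [[i|i]|]; simpl.
  all: repeat f_equal; try ring; apply functional_extensionality; intros j; unfold vshift; destruct Fin.eq_dec; ring.
Qed.

Lemma move_add n (p : R * vec n * vec n) d s0 s : move3 (move3 p d s0) d s = move3 p d (s0 + s).
Proof.
  destruct p as [[t xi] eta]. destruct d as [[i|i]|]; simpl.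
  - f_equal. f_equal. apply functional_extensionality; intros j; unfold vshift; destruct Fin.eq_dec; ring.
  - f_equal. apply functional_extensionality; intros j; unfold vshift; destruct Fin.eq_dec; ring.
  - rewrite Rplus_assoc. reflexivity.
Qed.

Lemma shift_deriv f x l : derivable_pt_lim (fun h => f (x + h)) 0 l -> derivable_pt_lim f x l.
Proof.
  intros H eps Heps. destruct (H eps Heps) as [d Hd]. exists d. intros h Hh0 Hh.
  assert (E := Hd h Hh0 Hh). rewrite Rplus_0_l, Rplus_0_r in E. auto.
Qed.

Lemma dir_lip n (a3 : R * vec n * vec n -> R) (D : list (option (Fin.t n + Fin.t n)) -> R * vec n * vec n -> R)
  (hD : partial_family (@move3 n) a3 D) d M :
  (forall p, Rabs (D (d :: nil) p) <= M) -> forall p s, Rabs (a3 (move3 p d s) - a3 p) <= M * Rabs s.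
Proof.
  intros HM p s. destruct hD as [H0 H1].
  set (phi := fun s => a3 (move3 p d s)).
  assert (Hphi : forall s0, derivable_pt_lim phi s0 (D (d :: nil) (move3 p d s0))).
  { intros s0. apply shift_deriv. unfold phi.
    assert (E := H1 nil d (move3 p d s0)).
    replace (fun h => a3 (move3 p d (s0 + h))) with (fun h => D nil (move3 (move3 p d s0) d h)).
    auto. apply functional_extensionality. intros h. rewrite move_add. auto. }
  assert (E0 : a3 p = phi 0) by (unfold phi; rewrite move0; auto).
  change (a3 (move3 p d s)) with (phi s). rewrite E0.
  destruct (Rtotal_order s 0) as [Hs|[Hs|Hs]].
  - destruct (MVT_cor2 phi (fun s0 => D (d :: nil) (move3 p d s0)) s 0 Hs) as [c [Hc _]].
    { intros; apply Hphi. }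
    replace (phi s - phi 0) with (- (phi 0 - phi s)) by ring. rewrite Rabs_Ropp, Hc, Rabs_mult.
    replace (0 - s) with (- s) by ring. rewrite Rabs_Ropp.
    apply Rmult_le_compat_r. apply Rabs_pos. apply HM.
  - subst. rewrite Rminus_diag, Rabs_R0. assert (0 <= M * Rabs 0) by (rewrite Rabs_R0; lra). lra.
  - destruct (MVT_cor2 phi (fun s0 => D (d :: nil) (move3 p d s0)) 0 s Hs) as [c [Hc _]].
    { intros; apply Hphi. }
    rewrite Hc, Rabs_mult. replace (s - 0) with s by ring.
    apply Rmult_le_compat_r. apply Rabs_pos. apply HM.
Qed.

Lemma fin_bound n (P : Fin.t n -> R -> Prop) : (forall i M M', P i M -> M <= M' -> P i M') ->
  (forall i, exists M, P i M) -> exists M, forall i, P i M.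
Proof.
  revert P. induction n; intros P Hmono H.
  - exists 0. intros i. inversion i.
  - destruct (IHn (fun i => P (Fin.FS i))) as [M1 HM1].
    { intros; eapply Hmono; eauto. } { intros; apply H. }
    destruct (H Fin.F1) as [M0 HM0].
    exists (Rmax M0 M1). intros i.
    apply (Fin.caseS' i (fun i => P i (Rmax M0 M1))).
    + eapply Hmono; eauto. apply Rmax_l.
    + intros j. eapply Hmono; eauto. apply Rmax_r.
Qed.

Definition mixv {n} (k : nat) (eta eta' : vec n) : vec n :=
  fun j => if Nat.ltb (proj1_sig (Fin.to_nat j)) k then eta' j else eta j.

Lemma mix0 n (eta eta' : vec n) : mixv 0 eta eta' = eta.
Proof. apply functional_extensionality. intros j. unfold mixv. destruct (Nat.ltb_spec (proj1_sig (Fin.to_nat j)) 0); auto; lia. Qed.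

Lemma mixn n (eta eta' : vec n) : mixv n eta eta' = eta'.
Proof. apply functional_extensionality. intros j. unfold mixv.
  destruct (Fin.to_nat j) as [x Hx] eqn:E. simpl. destruct (Nat.ltb_spec x n); auto; lia. Qed.

Lemma mixS n k (Hk : (k < n)%nat) (eta eta' : vec n) :
  mixv (S k) eta eta' = vshift (mixv k eta eta') (Fin.of_nat_lt Hk) (eta' (Fin.of_nat_lt Hk) - eta (Fin.of_nat_lt Hk)).
Proof.
  apply functional_extensionality. intros j. unfold vshift, mixv.
  destruct (Fin.eq_dec (Fin.of_nat_lt Hk) j) as [E|E].
  - subst j. rewrite Fin.to_nat_of_nat. simpl.
    destruct (Nat.ltb_spec k (S k)); [|lia]. destruct (Nat.ltb_spec k k); [lia|]. ring.
  - assert (Hne : proj1_sig (Fin.to_nat j) <> k).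
    { intros H. apply E. apply Fin.to_nat_inj. rewrite Fin.to_nat_of_nat. simpl. auto. }
    destruct (Nat.ltb_spec (proj1_sig (Fin.to_nat j)) (S k));
    destruct (Nat.ltb_spec (proj1_sig (Fin.to_nat j)) k); auto; lia.
Qed.

Lemma eta_lip n (a3 : R * vec n * vec n -> R) D (hD : partial_family (@move3 n) a3 D) M
  (HM : forall i p, Rabs (D (Some (inr i) :: nil) p) <= M) t xi (eta eta' : vec n) Dl
  (HD : forall j, Rabs (eta' j - eta j) <= Dl) :
  Rabs (a3 (t, xi, eta') - a3 (t, xi, eta)) <= INR n * M * Dl.
Proof.
  assert (Hk : forall k, (k <= n)%nat -> Rabs (a3 (t, xi, mixv k eta eta') - a3 (t, xi, eta)) <= INR k * M * Dl).
  { induction k; intros Hkn.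
    - rewrite mix0, Rminus_diag, Rabs_R0. simpl. lra.
    - assert (Hk' : (k < n)%nat) by lia.
      rewrite (mixS n k Hk').
      set (i := Fin.of_nat_lt Hk').
      assert (H1 := dir_lip n a3 D hD (Some (inr i)) M (HM i) (t, xi, mixv k eta eta') (eta' i - eta i)).
      simpl move3 in H1.
      assert (H2 := IHk ltac:(lia)).
      assert (HM0 : 0 <= M) by (apply Rle_trans with (Rabs (D (Some (inr i) :: nil) (t, xi, eta))); [apply Rabs_pos|apply HM]).
      assert (H3 : M * Rabs (eta' i - eta i) <= M * Dl) by (apply Rmult_le_compat_l; auto).
      assert (Htri := Rabs_triang (a3 (t, xi, vshift (mixv k eta eta') i (eta' i - eta i)) - a3 (t, xi, mixv k eta eta'))
         (a3 (t, xi, mixv k eta eta') - a3 (t, xi, eta))).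
      rewrite S_INR.
      replace (a3 (t, xi, vshift (mixv k eta eta') i (eta' i - eta i)) - a3 (t, xi, mixv k eta eta') +
         (a3 (t, xi, mixv k eta eta') - a3 (t, xi, eta))) with
         (a3 (t, xi, vshift (mixv k eta eta') i (eta' i - eta i)) - a3 (t, xi, eta)) in Htri by ring.
      lra. }
  assert (H := Hk n (le_n n)). rewrite mixn in H. auto.
Qed.

Lemma cont_a_path n (a : R -> vec n -> vec n -> R) (ha : Cb_inf3 a) (xi1 xi2 : vec n) :
  cont (fun t => a t xi2 (vadd xi1 (vscal t xi2))).
Proof.
  destruct ha as [D [hD hB]].
  set (a3 := fun p : R * vec n * vec n => match p with (t, xi, eta) => a t xi eta end) in hD.
  destruct (hB (None :: nil)) as [M0 HM0].
  destruct (fin_bound n (fun i M => forall p, Rabs (D (Some (inr i) :: nil) p) <= M)) as [Me HMe].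
  { intros i M M' H HMM p. eapply Rle_trans; eauto. }
  { intros i. apply hB. }
  apply (lip_cont _ (M0 + INR n * Me * vnorm xi2)).
  intros t' t.
  set (e' := vadd xi1 (vscal t' xi2)). set (e := vadd xi1 (vscal t xi2)).
  assert (H1 := dir_lip n a3 D hD None M0 HM0 (t, xi2, e') (t' - t)).
  simpl move3 in H1. replace (t + (t' - t)) with t' in H1 by ring.
  assert (H2 := eta_lip n a3 D hD Me HMe t xi2 e e' (vnorm xi2 * Rabs (t' - t))).
  assert (H2' : Rabs (a3 (t, xi2, e') - a3 (t, xi2, e)) <= INR n * Me * (vnorm xi2 * Rabs (t' - t))).
  { apply H2. intros j. unfold e, e', vadd, vscal.
    replace (xi1 j + t' * xi2 j - (xi1 j + t * xi2 j)) with ((t' - t) * xi2 j) by ring.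
    rewrite Rabs_mult, Rmult_comm. apply Rmult_le_compat_r. apply Rabs_pos. apply coord_le. }
  simpl in H1, H2'.
  assert (Htri := Rabs_triang (a t' xi2 e' - a t xi2 e') (a t xi2 e' - a t xi2 e)).
  replace (a t' xi2 e' - a t xi2 e' + (a t xi2 e' - a t xi2 e)) with (a t' xi2 e' - a t xi2 e) in Htri by ring.
  assert (E : INR n * Me * (vnorm xi2 * Rabs (t' - t)) = INR n * Me * vnorm xi2 * Rabs (t' - t)) by ring.
  lra.
Qed.

Lemma vnorm_line n (x1 x2 : vec n) t : vnorm (vsub x2 (vscal t x1)) = sqrt (qf (cc n x2) (pp n x1 x2) (kk n x1) t).
Proof. rewrite <- q_expand. rewrite sqrt_pow2; auto. apply vnorm_nonneg. Qed.

Lemma cont_vnorm_line n (x1 x2 : vec n) : cont (fun t => vnorm (vsub x2 (vscal t x1))).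
Proof.
  replace (fun t => vnorm (vsub x2 (vscal t x1))) with (fun t => sqrt (qf (cc n x2) (pp n x1 x2) (kk n x1) t))
    by (apply functional_extensionality; intros; rewrite vnorm_line; auto).
  intros t. apply (continuity_pt_comp (fun t => qf (cc n x2) (pp n x1 x2) (kk n x1) t) sqrt).
  unfold qf. intros. solve_cont.
  apply continuity_pt_sqrt. apply q_nonneg.
Qed.

Lemma cont_mult_path n sigma (hs : 0 < sigma) (a : R -> vec n -> vec n -> R) (ha : Cb_inf3 a)
  (w : vec n -> R) (hw : smooth_vec w) (x1 x2 xi1 xi2 : vec n) :
  cont (mult sigma a w x1 x2 xi1 xi2).
Proof.
  unfold mult, Ffun.
  assert (Hw : continuous_vec w).
  { destruct hw as [D [[H0 _] HC]]. replace w with (D nil). apply HC. apply functional_extensionality; auto. }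
  assert (C1 := cont_a_path n a ha xi1 xi2).
  assert (C2 := cont_w_line n w Hw x1 x2).
  assert (C3 := cont_vnorm_line n x1 x2).
  assert (C4 : cont (fun t => rpow (vnorm (vsub x2 (vscal t x1))) (2 * sigma))).
  { apply (cont_comp (fun t => vnorm (vsub x2 (vscal t x1))) (fun r => rpow r (2 * sigma))); auto.
    apply cont_rpow; lra. }
  apply (cont_mult (fun t => a t xi2 (vadd xi1 (vscal t xi2)))); auto.
  apply (cont_plus (fun t => rpow (vnorm (vsub x2 (vscal t x1))) (2 * sigma) * w (vsub x2 (vscal t x1)))).
  apply (cont_mult (fun t => rpow (vnorm (vsub x2 (vscal t x1))) (2 * sigma))); auto.
  apply (cont_mult (fun t => vnorm (vsub x2 (vscal t x1)) ^ 2)). apply cont_pow; auto.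
  apply (cont_minus (fun _ => 1)). apply cont_const. auto.
Qed.

Lemma schwartz_decay u : schwartz u -> decay u.
Proof. intros [D [H0 [_ HB]]] j. destruct (HB 0%nat j) as [C HC]. exists C. intros t. rewrite <- H0. auto. Qed.

Lemma schwartz_cont_deriv u du : schwartz u -> (forall t, derivable_pt_lim u t (du t)) -> cont du.
Proof.
  intros [D [H0 [HD _]]] Hu.
  assert (E : du = D 1%nat).
  { apply functional_extensionality. intros t. apply (uniqueness_limite u t). auto.
    replace u with (D 0%nat) by (apply functional_extensionality; auto). apply HD. }
  rewrite E. apply (cont_deriv _ (D 2%nat)). apply HD.
Qed.

Lemma rpow_nonneg r e : 0 <= rpow r e.
Proof. unfold rpow. destruct Rle_dec. lra. apply Rlt_le, Rpow_pos. Qed.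

Lemma F_nonneg n sigma (w : vec n -> R) (hw01 : forall x, 0 <= w x <= 1) y : 0 <= Ffun sigma w y.
Proof.
  unfold Ffun. assert (H1 := rpow_nonneg (vnorm y) (2 * sigma)). assert (H2 := hw01 y).
  assert (0 <= vnorm y ^ 2) by apply pow2_ge_0. nra.
Qed.

Lemma F_low0 n sigma (w : vec n -> R) (hw0 : forall x, vnorm x <= 1 -> w x = 0) y :
  vnorm y ^ 2 <= 1 -> Ffun sigma w y = vnorm y ^ 2.
Proof.
  intros H. assert (Hv := vnorm_nonneg n y).
  assert (vnorm y <= 1) by nra. unfold Ffun. rewrite hw0 by auto. ring.
Qed.

Lemma F_low1 n sigma (hs : 0 < sigma < 1) (w : vec n -> R) (hw01 : forall x, 0 <= w x <= 1) y :
  1 <= vnorm y ^ 2 -> Rpower (vnorm y ^ 2) sigma <= Ffun sigma w y.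
Proof.
  intros H. assert (Hv := vnorm_nonneg n y).
  assert (Hv1 : 1 <= vnorm y) by nra.
  unfold Ffun, rpow. destruct (Rle_dec (vnorm y) 0); [lra|].
  assert (E : Rpower (vnorm y) (2 * sigma) = Rpower (vnorm y ^ 2) sigma).
  { rewrite <- Rpow2 by lra. rewrite Rpower_mult. auto. }
  rewrite E.
  assert (Hle : Rpower (vnorm y ^ 2) sigma <= vnorm y ^ 2).
  { rewrite <- (Rpow_1 (vnorm y ^ 2)) at 2 by lra. apply Rpow_mono_exp; lra. }
  assert (H2 := hw01 y). nra.
Qed.

Lemma sqrt_Rpower z e : 0 < z -> Rpower (sqrt z) e ^ 2 = Rpower z e.
Proof.
  intros Hz. rewrite Rpow_sq. rewrite <- Rpower_sqrt by auto. rewrite Rpower_mult. f_equal. field.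
Qed.

Lemma sqrt_sum_le a b : 0 <= a -> 0 <= b -> sqrt (a + b) <= sqrt a + sqrt b.
Proof.
  intros Ha Hb. assert (H1 := sqrt_pos a). assert (H2 := sqrt_pos b).
  rewrite <- (sqrt_pow2 (sqrt a + sqrt b)) by lra. apply sqrt_le_1_alt.
  replace ((sqrt a + sqrt b) ^ 2) with (sqrt a ^ 2 + sqrt b ^ 2 + 2 * sqrt a * sqrt b) by ring.
  rewrite !pow2_sqrt by auto. nra.
Qed.

Theorem lemma1 (n : nat) (hn : (1 <= n)%nat) (sigma : R) (hsigma : 0 < sigma < 1)
  (a : R -> vec n -> vec n -> R) (ha : Cb_inf3 a) (a0 : R) (ha0 : 0 < a0)
  (hapos : forall t xi eta, a0 <= a t xi eta)
  (w : vec n -> R) (hw : smooth_vec w) (hw01 : forall x, 0 <= w x <= 1)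
  (hw1 : forall x, 2 <= vnorm x -> w x = 1) (hw0 : forall x, vnorm x <= 1 -> w x = 0) :
  exists C, 0 < C /\
    forall (ur ui dur dui : R -> R),
      schwartz ur -> schwartz ui ->
      (forall t, derivable_pt_lim ur t (dur t)) ->
      (forall t, derivable_pt_lim ui t (dui t)) ->
      forall (x1 x2 xi1 xi2 : vec n) (IA IB IU : R),
        int_R (fun t => (weight sigma x1 x2 t) ^ 2 * (ur t ^ 2 + ui t ^ 2)) IA ->
        int_R (fun t => (dur t / (2 * PI) + mult sigma a w x1 x2 xi1 xi2 t * ur t) ^ 2
                      + (dui t / (2 * PI) + mult sigma a w x1 x2 xi1 xi2 t * ui t) ^ 2) IB ->
        int_R (fun t => ur t ^ 2 + ui t ^ 2) IU ->
        sqrt IA <= C * (sqrt IB + sqrt IU).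
Proof.
  assert (HK0 := K0f_pos a0 ha0).
  exists (sqrt (3 * K0f a0)). split. apply sqrt_lt_R0. lra.
  intros ur ui dur dui Sr Si Hr Hi x1 x2 xi1 xi2 IA IB IU HA HB HU.
  set (m := mult sigma a w x1 x2 xi1 xi2).
  set (k := kk n x1). set (p := pp n x1 x2). set (c0 := cc n x2).
  assert (Cm : cont m) by (apply cont_mult_path; auto; lra).
  assert (Cr := schwartz_cont_deriv ur dur Sr Hr).
  assert (Ci := schwartz_cont_deriv ui dui Si Hi).
  assert (Dr := schwartz_decay ur Sr). assert (Di := schwartz_decay ui Si).
  assert (hk : 0 <= k) by apply vnorm_nonneg.
  assert (hq0 : forall t, 0 <= qf c0 p k t) by (intros; apply q_nonneg).
  assert (hcs : forall t, (k ^ 2 * t - p) ^ 2 <= k ^ 2 * qf c0 p k t) by (intros; apply q_cs).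
  assert (hmF : forall t, a0 * Ffun sigma w (vsub x2 (vscal t x1)) <= m t).
  { intros t. unfold m, mult. assert (HF := F_nonneg n sigma w hw01 (vsub x2 (vscal t x1))).
    assert (Ha := hapos t xi2 (vadd xi1 (vscal t xi2))). nra. }
  assert (hm1 : forall t, 1 <= qf c0 p k t -> a0 * Rpower (qf c0 p k t) sigma <= m t).
  { intros t Ht. unfold c0, p, k in *. rewrite <- q_expand in *.
    apply Rle_trans with (a0 * Ffun sigma w (vsub x2 (vscal t x1))); auto.
    apply Rmult_le_compat_l. lra. apply F_low1; auto. }
  assert (hm0 : forall t, qf c0 p k t <= 1 -> a0 * qf c0 p k t <= m t).
  { intros t Ht. unfold c0, p, k in *. rewrite <- q_expand in *.
    rewrite <- (F_low0 n sigma w hw0) by auto. apply hmF. }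
  assert (HYB : forall N, 0 <= N -> Int (Phif ur ui dur dui m) (-N) N <= IB).
  { intros N HN. destruct HB as [Hub _]. apply Hub. exists N. split; auto.
    assert (CP : cont (Phif ur ui dur dui m)).
    { unfold Phif. assert (H1 := cont_deriv ur dur Hr). assert (H2 := cont_deriv ui dui Hi). unfold Rdiv. solve_cont. }
    exists (cont_int _ (-N) N CP ltac:(lra)). symmetry. apply Int_eq. }
  assert (HXU : forall N, 0 <= N -> Int (Uf ur ui) (-N) N <= IU).
  { intros N HN. destruct HU as [Hub _]. apply Hub. exists N. split; auto.
    assert (CP : cont (Uf ur ui)).
    { unfold Uf. assert (H1 := cont_deriv ur dur Hr). assert (H2 := cont_deriv ui dui Hi). solve_cont. }
    exists (cont_int _ (-N) N CP ltac:(lra)). symmetry. apply Int_eq. }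
  assert (Hfin := final_est sigma a0 k p c0 ur ui dur dui m hsigma ha0 hk hq0 hcs Hr Hi Cr Ci Cm hm1 hm0 Dr Di IB IU HYB HXU).
  assert (HCW := CWU sigma k p c0 ur ui dur dui hq0 Hr Hi).
  set (Wc := fun t => 1 + Rpower (1 + k ^ 2) (2 * sigma / (2 * sigma + 1)) + Rpower (1 + qf c0 p k t) (2 * sigma)) in *.
  assert (Hpt : forall t, weight sigma x1 x2 t ^ 2 * (ur t ^ 2 + ui t ^ 2) <= 3 * (Wc t * Uf ur ui t)).
  { intros t. unfold weight, Wc, Uf, jbr.
    rewrite q_expand. fold c0 p. unfold k, kk.
    set (A1 := Rpower (sqrt (1 + vnorm x1 ^ 2)) (2 * sigma / (2 * sigma + 1))).
    set (A2 := Rpower (sqrt (1 + qf c0 p (vnorm x1) t)) (2 * sigma)).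
    assert (E1 : A1 ^ 2 = Rpower (1 + vnorm x1 ^ 2) (2 * sigma / (2 * sigma + 1))).
    { apply sqrt_Rpower. assert (0 <= vnorm x1 ^ 2) by apply pow2_ge_0. lra. }
    assert (E2 : A2 ^ 2 = Rpower (1 + qf c0 p (vnorm x1) t) (2 * sigma)).
    { apply sqrt_Rpower. assert (H := hq0 t). unfold k, kk in H. lra. }
    rewrite <- E1, <- E2.
    assert (0 <= ur t ^ 2 + ui t ^ 2) by (apply Rplus_le_le_0_compat; apply pow2_ge_0).
    assert ((1 + A1 + A2) ^ 2 <= 3 * (1 + A1 ^ 2 + A2 ^ 2)).
    { assert (0 <= (1 - A1) ^ 2) by apply pow2_ge_0. assert (0 <= (1 - A2) ^ 2) by apply pow2_ge_0.
      assert (0 <= (A1 - A2) ^ 2) by apply pow2_ge_0. nra. }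
    nra. }
  assert (HIA : IA <= 3 * K0f a0 * (IB + IU)).
  { destruct HA as [_ Hlub]. apply Hlub. intros y [N [HN [pr Hpr]]]. rewrite <- Hpr.
    assert (pr' := cont_int (fun t => 3 * (Wc t * Uf ur ui t)) (-N) N
      ltac:(apply cont_mult; [apply cont_const | exact HCW]) ltac:(lra)).
    apply Rle_trans with (RiemannInt pr').
    apply RiemannInt_P19. lra. intros; apply Hpt.
    rewrite <- Int_eq, Int_scal by (auto; lra).
    assert (H := Hfin N HN). unfold K0f. lra. }
  assert (HIB : 0 <= IB).
  { apply Rle_trans with (Int (Phif ur ui dur dui m) (-0) 0); [|apply HYB; lra].
    replace (-0) with 0 by ring. rewrite (Int_eq _ _ _ (RiemannInt_P7 _ 0)), RiemannInt_P9. lra. }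
  assert (HIU : 0 <= IU).
  { apply Rle_trans with (Int (Uf ur ui) (-0) 0); [|apply HXU; lra].
    replace (-0) with 0 by ring. rewrite (Int_eq _ _ _ (RiemannInt_P7 _ 0)), RiemannInt_P9. lra. }
  apply Rle_trans with (sqrt (3 * K0f a0 * (IB + IU))).
  apply sqrt_le_1_alt. auto.
  rewrite sqrt_mult by lra. apply Rmult_le_compat_l. apply sqrt_pos.
  apply sqrt_sum_le; auto.
Qed.
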